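(* With the notation of the context, for all $\tau=u+iv\in\mathbb{H}$ and $z=x+iy\in\mathbb{H}$, $$\xi_{1/2,\tau}\,\Theta_{\Delta,r}(\tau,z,\varphi)=4i\sqrt{N}\,y^2\frac{\partial}{\partial z}\overline{\Theta_{\Delta,r}(\tau,z,\varphi_{\mathrm{Sh}})}.$$
   Context: Let $N\ge1$. Let $V$ be the space of rational $2\times2$ trace-zero matrices with $Q(\lambda)=N\det\lambda$ and $(\lambda,\mu)=-N\operatorname{tr}(\lambda\mu)$. Let $L=\{\begin{pmatrix}b&-a/N\\c&-b\end{pmatrix}:a,b,c\in\mathbb{Z}\}$, $L'=\{\begin{pmatrix}b/2N&-a/N\\c&-b/2N\end{pmatrix}:a,b,c\in\mathbb{Z}\}$, so $L'/L\cong\mathbb{Z}/2N\mathbb{Z}$ with quadratic form $x\mapsto -x^2/4N$. For $z=x+iy$ let $\lambda(z)=\frac1{\sqrt N y}\begin{pmatrix}-x&|z|^2\\-1&x\end{pmatrix}$, $p_z(\lambda)=(\lambda,\lambda(z))$, $R(\lambda,z)=\frac12p_z(\lambda)^2-(\lambda,\lambda)$. Let $\Delta$ be a fundamental discriminant, $r\in\mathbb{Z}$ with $\Delta\equiv r^2\pmod{4N}$, $Q_\Delta=Q/|\Delta|$, $\mathcal{D}(\Delta)=L'/\Delta L$, $\pi:\mathcal{D}(\Delta)\to L'/L$ the projection. The genus character: for $\delta=\begin{pmatrix}b/2N&-a/N\\c&-b/2N\end{pmatrix}\in L'$, $\chi_\Delta(\delta)=\left(\frac{\Delta}{n}\right)$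 if $\Delta\mid b^2-4Nac$, $(b^2-4Nac)/\Delta$ is a square mod $4N$ and $\gcd(a,b,c,\Delta)=1$, where $n$ is any integer prime to $\Delta$ represented by one of the forms $[N_1a,b,N_2c]$ with $N_1N_2=N$, $N_i>0$; otherwise $\chi_\Delta(\delta)=0$ (it depends only on $\delta$ mod $\Delta L$). For $\tau=u+iv$ put $\varphi(\lambda,\tau,z)=e^{2\pi iQ_\Delta(\lambda)\tau}\sqrt v\,p_z(\lambda)e^{-2\pi vR(\lambda,z)/|\Delta|}$ and, writing $\lambda=\begin{pmatrix}b/2N&-a/N\\c&-b/2N\end{pmatrix}$, $\varphi_{\mathrm{Sh}}(\lambda,\tau,z)=-\frac{cN\bar z^2-b\bar z+a}{4Ny^2}e^{-2\pi vR(\lambda,z)/|\Delta|}e^{2\pi iQ_\Delta(\lambda)\tau}$. For $\psi\in\{\varphi,\varphi_{\mathrm{Sh}}\}$, $\Theta_{\Delta,r}(\tau,z,\psi)=v^{1/2}\sum_{h\in L'/L}\sum_{\delta}\chi_\Delta(\delta)\sum_{\lambda\in\Delta L+\delta}\psi(\lambda,\tau,z)\mathfrak{e}_h$, where $\delta$ runs over $\mathcal{D}(\Delta)$ with $\pi(\delta)=rh$ and $Q_\Delta(\delta)\equiv\operatorname{sgn}(\Delta)Q(h)\pmod{\mathbb{Z}}$, and $\mathfrak{e}_h$ is the standard basis of $\mathbb{C}[L'/L]$. $\xi_{1/2,\tau}f=-2iv^{1/2}\overline{\partial f/\partial\bar\tau}$, applied componentwise. *)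

(* Defs.v *)
From Stdlib Require Import Reals ZArith Znumtheory List Lia Lra.
From Stdlib Require Import ClassicalEpsilon.
From Coquelicot Require Import Coquelicot.
Import ListNotations.

Open Scope R_scope.

Definition zrange (lo : Z) (n : nat) : list Z :=
  map (fun k => (lo + Z.of_nat k)%Z) (seq 0 n).

Definition squarefree (m : Z) : Prop :=
  forall p : Z, prime p -> ~ (p * p | m)%Z.

Definition fund_disc (D : Z) : Prop :=
  ((D mod 4 = 1)%Z /\ squarefree D) \/
  (exists m : Z, D = (4 * m)%Z /\ ((m mod 4 = 2)%Z \/ (m mod 4 = 3)%Z) /\ squarefree m).

Definition legendre (a p : Z) : Z :=
  if Z.eq_dec (a mod p) 0 then 0%Z
  else if excluded_middle_informative (exists t : Z, ((t * t - a) mod p = 0)%Z)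
       then 1%Z else (-1)%Z.

Definition kron2 (a : Z) : Z :=
  if Z.even a then 0%Z
  else if orb (Z.eqb (a mod 8) 1) (Z.eqb (a mod 8) 7) then 1%Z else (-1)%Z.

Definition kron_prime (a p : Z) : Z :=
  if Z.eq_dec p 2 then kron2 a else legendre a p.

(* p-adic valuation of n <> 0, p >= 2 *)
Fixpoint pval_aux (fuel : nat) (p n : Z) : nat :=
  match fuel with
  | O => O
  | S f => if Z.eqb (n mod p) 0 then S (pval_aux f p (n / p)) else O
  end.
Definition pval (p n : Z) : nat := pval_aux (Z.to_nat (Z.abs n)) p n.

(* Kronecker symbol (a/n), n in Z:
   (a/n) = (a/u) * prod_{p prime} (a/p)^{v_p(n)}, n = u * prod p^{v_p(n)}, u = +-1,
   with (a/-1) = -1 if a < 0 and 1 otherwise; (a/0) = 1 if a = +-1, 0 otherwise. *)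
Definition kronecker (a n : Z) : Z :=
  if Z.eq_dec n 0 then (if Z.eq_dec (Z.abs a) 1 then 1%Z else 0%Z)
  else
    ((if Z.ltb n 0 then (if Z.ltb a 0 then (-1)%Z else 1%Z) else 1%Z) *
     fold_right Z.mul 1%Z
       (map (fun p => if prime_dec p then (kron_prime a p ^ Z.of_nat (pval p n))%Z else 1%Z)
            (zrange 2 (Z.to_nat (Z.abs n - 1)))))%Z.

(* delta = [[b/2N, -a/N],[c, -b/2N]] in L' is encoded by (a,b,c) in Z^3 *)

Definition genus_cond (N D a b c : Z) : Prop :=
  (D | b * b - 4 * N * a * c)%Z /\
  (exists t : Z, (4 * N | (b * b - 4 * N * a * c) / D - t * t)%Z) /\
  Z.gcd (Z.gcd (Z.gcd a b) c) D = 1%Z.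

Definition represented (N a b c n : Z) : Prop :=
  exists N1 N2 x y : Z, (0 < N1)%Z /\ (0 < N2)%Z /\ (N1 * N2 = N)%Z /\
    n = (N1 * a * x * x + b * x * y + N2 * c * y * y)%Z.

(* chi_Delta(delta): (Delta/n) for any n prime to Delta represented by one of the
   forms, when genus_cond holds; 0 otherwise.  (Well-definedness is part of the
   theory; we pick such an n by choice.) *)
Definition chi (N D a b c : Z) : Z :=
  epsilon (inhabits 0%Z) (fun e =>
    (genus_cond N D a b c /\
       exists n : Z, Z.gcd n D = 1%Z /\ represented N a b c n /\ e = kronecker D n) \/
    (~ genus_cond N D a b c /\ e = 0%Z)).

Record mat2 := Mat2 { m11 : R; m12 : R; m21 : R; m22 : R }.

Definition tr_mul (A B : mat2) : R :=
  m11 A * m11 B + m12 A * m21 B + m21 A * m12 B + m22 A * m22 B.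
Definition det2 (A : mat2) : R := m11 A * m22 A - m12 A * m21 A.

Definition Qf (N : Z) (A : mat2) : R := IZR N * det2 A.
Definition bil (N : Z) (A B : mat2) : R := - IZR N * tr_mul A B.

Definition lamL' (N a b c : Z) : mat2 :=
  Mat2 (IZR b / (2 * IZR N)) (- IZR a / IZR N) (IZR c) (- IZR b / (2 * IZR N)).

Definition lam_z (N : Z) (z : C) : mat2 :=
  let x := Re z in let y := Im z in
  let s := / (sqrt (IZR N) * y) in
  Mat2 (s * - x) (s * (x ^ 2 + y ^ 2)) (s * -1) (s * x).

Definition p_z (N : Z) (z : C) (A : mat2) : R := bil N A (lam_z N z).
Definition Rf (N : Z) (A : mat2) (z : C) : R := / 2 * p_z N z A ^ 2 - bil N A A.
Definition QD (N D : Z) (A : mat2) : R := Qf N A / IZR (Z.abs D).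

Open Scope C_scope.

Definition cexp (w : C) : C := (exp (Re w) * cos (Im w), exp (Re w) * sin (Im w))%R.

Definition csum {A : Type} (l : list A) (f : A -> C) : C :=
  fold_right (fun x acc => f x + acc) (RtoC 0) l.

Definition box_sum (f : Z -> Z -> Z -> C) (n : nat) : C :=
  let I := zrange (- Z.of_nat n) (2 * n + 1) in
  csum I (fun k1 => csum I (fun k2 => csum I (fun k3 => f k1 k2 k3))).

(* lattice sum over Z^3 (absolutely convergent in our use), as the limit of box sums *)
Definition lattice_sum (f : Z -> Z -> Z -> C) : C :=
  (real (Lim_seq (fun n => Re (box_sum f n))), real (Lim_seq (fun n => Im (box_sum f n))))%R.

Definition phi (N D : Z) (a b c : Z) (tau z : C) : C :=
  let lam := lamL' N a b c in
  let v := Im tau in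
  cexp (2 * PI * Ci * RtoC (QD N D lam) * tau) * RtoC (sqrt v) * RtoC (p_z N z lam)
  * RtoC (exp (- 2 * PI * v * Rf N lam z / IZR (Z.abs D))).

Definition phiSh (N D : Z) (a b c : Z) (tau z : C) : C :=
  let lam := lamL' N a b c in
  let v := Im tau in let y := Im z in
  let zb := Cconj z in
  - ((RtoC (IZR c) * RtoC (IZR N) * zb * zb - RtoC (IZR b) * zb + RtoC (IZR a))
      / RtoC (4 * IZR N * y ^ 2))
  * RtoC (exp (- 2 * PI * v * Rf N lam z / IZR (Z.abs D)))
  * cexp (2 * PI * Ci * RtoC (QD N D lam) * tau).

(* h-component (h representing an element of L'/L = Z/2NZ) of
   Theta_{D,r}(tau,z,psi) = v^{1/2} sum_h sum_delta chi(delta) sum_{lambda in D L + delta} psi(lambda) e_h,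
   delta running over D(Delta) = L'/Delta L (representatives (a,b,c) with
   0 <= a,c < |D|, 0 <= b < 2N|D|) with pi(delta) = r h and
   Q_D(delta) = sgn(D) Q(h) mod Z, where Q(h) = - h^2 / 4N.
   Delta L consists of (D a', 2 N D b', D c'). *)

Definition Theta (N D r : Z) (psi : Z -> Z -> Z -> C -> C -> C) (tau z : C) (h : Z) : C :=
  let AD := Z.to_nat (Z.abs D) in
  RtoC (sqrt (Im tau)) *
  csum (zrange 0 AD) (fun a =>
  csum (zrange 0 (Z.to_nat (2 * N) * AD)) (fun b =>
  csum (zrange 0 AD) (fun c =>
    if excluded_middle_informative
         ((2 * N | b - r * h)%Z /\
          exists k : Z, (QD N D (lamL' N a b c) - IZR (Z.sgn D) * (- IZR (h * h) / (4 * IZR N)))%R = IZR k)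
    then RtoC (IZR (chi N D a b c)) *
         lattice_sum (fun k1 k2 k3 =>
           psi (a + D * k1)%Z (b + 2 * N * D * k2)%Z (c + D * k3)%Z tau z)
    else RtoC 0))).

Definition dR (F : R -> C) (t : R) : C :=
  (Derive (fun s => Re (F s)) t, Derive (fun s => Im (F s)) t).

Definition dbar (F : C -> C) (w : C) : C :=
  / 2 * (dR (fun s => F (s, Im w)) (Re w) + Ci * dR (fun s => F (Re w, s)) (Im w)).
Definition dhol (F : C -> C) (w : C) : C :=
  / 2 * (dR (fun s => F (s, Im w)) (Re w) - Ci * dR (fun s => F (Re w, s)) (Im w)).

Definition xi_half (F : C -> C) (tau : C) : C :=
  - 2 * Ci * RtoC (sqrt (Im tau)) * Cconj (dbar F tau).

Close Scope C_scope.

(* Main.v *)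
Require Import Defs.
From Stdlib Require Import Reals ZArith Znumtheory List Lia Lra Psatz ClassicalEpsilon.
From Coquelicot Require Import Coquelicot.
Import ListNotations.
Open Scope R_scope.

Definition rsum {A : Type} (l : list A) (f : A -> R) : R :=
  fold_right (fun x acc => f x + acc) 0 l.

Lemma rsum_ext_in {A} (l : list A) f g : (forall x, In x l -> f x = g x) -> rsum l f = rsum l g.
Proof. induction l as [|a l IH]; simpl; intros H; auto. rewrite H by auto. rewrite IH; auto. Qed.
Lemma rsum_ext {A} (l : list A) f g : (forall x, f x = g x) -> rsum l f = rsum l g.
Proof. intros; apply rsum_ext_in; auto. Qed.
Lemma rsum_app {A} (l1 l2 : list A) f : rsum (l1 ++ l2) f = rsum l1 f + rsum l2 f.
Proof. induction l1; simpl; [lra|rewrite IHl1; lra]. Qed.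
Lemma rsum_scal {A} (l : list A) c f : rsum l (fun x => c * f x) = c * rsum l f.
Proof. induction l; simpl; [ring| rewrite IHl; ring]. Qed.
Lemma rsum_plus {A} (l : list A) f g : rsum l (fun x => f x + g x) = rsum l f + rsum l g.
Proof. induction l; simpl; [ring| rewrite IHl; ring]. Qed.
Lemma rsum_minus {A} (l : list A) f g : rsum l (fun x => f x - g x) = rsum l f - rsum l g.
Proof. induction l; simpl; [ring| rewrite IHl; ring]. Qed.
Lemma rsum_zero {A} (l : list A) f : (forall x, In x l -> f x = 0) -> rsum l f = 0.
Proof. induction l as [|a l IH]; simpl; intros H; auto. rewrite H, IH; auto; lra. Qed.
Lemma rsum_abs_le {A} (l : list A) f g : (forall x, Rabs (f x) <= g x) -> Rabs (rsum l f) <= rsum l g.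
Proof. induction l; simpl; intros H. rewrite Rabs_R0; lra.
  eapply Rle_trans; [apply Rabs_triang|]. specialize (IHl H). specialize (H a). lra. Qed.
Lemma rsum_le {A} (l : list A) f g : (forall x, f x <= g x) -> rsum l f <= rsum l g.
Proof. induction l; simpl; intros H. lra. specialize (IHl H). specialize (H a). lra. Qed.
Lemma rsum_nonneg {A} (l : list A) f : (forall x, 0 <= f x) -> 0 <= rsum l f.
Proof. induction l; simpl; intros H. lra. specialize (IHl H). specialize (H a). lra. Qed.

Lemma Re_csum {A} (l : list A) f : Re (csum l f) = rsum l (fun x => Re (f x)).
Proof. induction l; simpl; auto. rewrite <- IHl. reflexivity. Qed.
Lemma Im_csum {A} (l : list A) f : Im (csum l f) = rsum l (fun x => Im (f x)).
Proof. induction l; simpl; auto. rewrite <- IHl. reflexivity. Qed.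

Lemma zrange_S lo m : zrange lo (S m) = lo :: zrange (lo + 1) m.
Proof.
  unfold zrange. simpl. f_equal. lia.
  rewrite <- seq_shift, map_map. apply map_ext. intros; lia.
Qed.
Lemma zrange_app lo a b : zrange lo (a + b) = zrange lo a ++ zrange (lo + Z.of_nat a) b.
Proof.
  revert lo; induction a; intros lo.
  - simpl. f_equal. lia.
  - rewrite Nat.add_succ_l, !zrange_S, IHa. rewrite <- app_comm_cons. f_equal. f_equal. f_equal. lia.
Qed.
Lemma zrange_in lo m k : In k (zrange lo m) -> (lo <= k < lo + Z.of_nat m)%Z.
Proof. unfold zrange. rewrite in_map_iff. intros [j [<- Hj]]. apply in_seq in Hj. lia. Qed.

Definition Ib (n : nat) : list Z := zrange (- Z.of_nat n) (2 * n + 1).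
Definition ind (n : nat) (k : Z) : R := if Z.leb (Z.abs k) (Z.of_nat n) then 1 else 0.

Lemma ind_sum (n m : nat) (g : Z -> R) : (n <= m)%nat ->
  rsum (Ib m) (fun k => ind n k * g k) = rsum (Ib n) g.
Proof.
  intros Hnm. unfold Ib.
  replace (2 * m + 1)%nat with ((m - n) + ((2 * n + 1) + (m - n)))%nat by lia.
  rewrite zrange_app, zrange_app, !rsum_app.
  rewrite (rsum_zero (zrange (- Z.of_nat m) (m - n))).
  rewrite (rsum_zero (zrange _ (m - n))).
  replace (- Z.of_nat m + Z.of_nat (m - n))%Z with (- Z.of_nat n)%Z by lia.
  rewrite (rsum_ext_in _ _ g). lra.
  - intros k Hk. apply zrange_in in Hk. unfold ind. destruct (Z.leb_spec (Z.abs k) (Z.of_nat n)); [ring|lia].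
  - intros k Hk. apply zrange_in in Hk. unfold ind. destruct (Z.leb_spec (Z.abs k) (Z.of_nat n)); [lia|ring].
  - intros k Hk. apply zrange_in in Hk. unfold ind. destruct (Z.leb_spec (Z.abs k) (Z.of_nat n)); [lia|ring].
Qed.

Definition rsum3 (l : list Z) (F : Z -> Z -> Z -> R) : R :=
  rsum l (fun k1 => rsum l (fun k2 => rsum l (fun k3 => F k1 k2 k3))).
Definition rbox (F : Z -> Z -> Z -> R) (n : nat) : R := rsum3 (Ib n) F.

Lemma rbox_ind n m F : (n <= m)%nat ->
  rbox F n = rsum3 (Ib m) (fun k1 k2 k3 => ind n k1 * ind n k2 * ind n k3 * F k1 k2 k3).
Proof.
  intros H. unfold rbox, rsum3.
  transitivity (rsum (Ib m) (fun k1 => ind n k1 * rsum (Ib m) (fun k2 => ind n k2 *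
     rsum (Ib m) (fun k3 => ind n k3 * F k1 k2 k3)))).
  - rewrite ind_sum by auto. apply rsum_ext; intros k1. rewrite ind_sum by auto.
    apply rsum_ext; intros k2. rewrite ind_sum by auto. reflexivity.
  - apply rsum_ext; intros k1. rewrite <- rsum_scal. apply rsum_ext; intros k2.
    rewrite <- rsum_scal, <- rsum_scal. apply rsum_ext; intros k3. ring.
Qed.

Lemma ind01 n k : ind n k = 0 \/ ind n k = 1.
Proof. unfold ind. destruct (Z.leb _ _); auto. Qed.

Lemma rsum3_minus l F G : rsum3 l F - rsum3 l G = rsum3 l (fun k1 k2 k3 => F k1 k2 k3 - G k1 k2 k3).
Proof. unfold rsum3. rewrite <- rsum_minus. apply rsum_ext; intros. rewrite <- rsum_minus.
  apply rsum_ext; intros. rewrite <- rsum_minus. reflexivity. Qed.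
Lemma rsum3_abs l G H : (forall k1 k2 k3, Rabs (G k1 k2 k3) <= H k1 k2 k3) -> Rabs (rsum3 l G) <= rsum3 l H.
Proof. intros HG. unfold rsum3. apply rsum_abs_le; intros. eapply Rle_trans; [apply rsum_abs_le; intros; apply Rle_refl|].
  apply rsum_le; intros. eapply Rle_trans; [apply rsum_abs_le; intros; apply Rle_refl|].
  apply rsum_le; intros. apply HG. Qed.
Lemma rsum3_le l G H : (forall k1 k2 k3, G k1 k2 k3 <= H k1 k2 k3) -> rsum3 l G <= rsum3 l H.
Proof. intros HG. unfold rsum3. repeat (apply rsum_le; intros). apply HG. Qed.

Lemma rbox_diff n m F M : (n <= m)%nat -> (forall k1 k2 k3, Rabs (F k1 k2 k3) <= M k1 k2 k3) ->
  Rabs (rbox F m - rbox F n) <= rbox M m - rbox M n.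
Proof.
  intros Hnm HF. rewrite (rbox_ind n m F Hnm), (rbox_ind n m M Hnm).
  unfold rbox. rewrite !rsum3_minus. apply rsum3_abs. intros k1 k2 k3.
  specialize (HF k1 k2 k3).
  replace (F k1 k2 k3 - ind n k1 * ind n k2 * ind n k3 * F k1 k2 k3) with
    ((1 - ind n k1 * ind n k2 * ind n k3) * F k1 k2 k3) by ring.
  replace (M k1 k2 k3 - ind n k1 * ind n k2 * ind n k3 * M k1 k2 k3) with
    ((1 - ind n k1 * ind n k2 * ind n k3) * M k1 k2 k3) by ring.
  rewrite Rabs_mult.
  destruct (ind01 n k1) as [-> | ->]; destruct (ind01 n k2) as [-> | ->];
  destruct (ind01 n k3) as [-> | ->];
  match goal with |- Rabs ?c * _ <= _ => replace (Rabs c) with c by (rewrite Rabs_pos_eq; lra) end; lra.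
Qed.

Definition summ (M : Z -> Z -> Z -> R) : Prop :=
  (forall k1 k2 k3, 0 <= M k1 k2 k3) /\ exists B, forall n, rbox M n <= B.

Lemma rbox_mono M : (forall k1 k2 k3, 0 <= M k1 k2 k3) -> forall n m, (n <= m)%nat -> rbox M n <= rbox M m.
Proof. intros HM n m H. pose proof (rbox_diff n m M M H) as Hd.
  assert (Hx : forall k1 k2 k3, Rabs (M k1 k2 k3) <= M k1 k2 k3) by (intros; rewrite Rabs_pos_eq; auto; lra).
  specialize (Hd Hx). pose proof (Rabs_pos (rbox M m - rbox M n)). lra. Qed.

Lemma summ_lim M : summ M -> exists L, is_lim_seq (rbox M) (Finite L) /\ forall n, rbox M n <= L.
Proof.
  intros [H0 [B HB]].
  destruct (ex_finite_lim_seq_incr (rbox M) B) as [L HL].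
  - intros n; apply rbox_mono; auto.
  - auto.
  - exists L; split; auto. intros n. apply is_lim_seq_incr_compare; auto.
    intros; apply rbox_mono; auto.
Qed.

Lemma conv_bound M F L : (forall k1 k2 k3, 0 <= M k1 k2 k3) -> is_lim_seq (rbox M) (Finite L) ->
  (forall n, rbox M n <= L) ->
  (forall k1 k2 k3, Rabs (F k1 k2 k3) <= M k1 k2 k3) ->
  exists l, is_lim_seq (rbox F) (Finite l) /\ forall n, Rabs (rbox F n - l) <= L - rbox M n.
Proof.
  intros H0 HL HLb HF.
  assert (Hc : ex_finite_lim_seq (rbox F)).
  { apply ex_lim_seq_cauchy_corr. intros eps.
    apply is_lim_seq_spec in HL. destruct (HL eps) as [N HN]. exists N. intros n m Hn Hm.
    destruct (Nat.le_ge_cases n m) as [Hnm|Hnm].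
    - rewrite Rabs_minus_sym. eapply Rle_lt_trans; [apply rbox_diff; eauto|].
      specialize (HN n Hn). specialize (HLb m). apply Rabs_lt_between in HN. lra.
    - eapply Rle_lt_trans; [apply rbox_diff; eauto|].
      specialize (HN m Hm). specialize (HLb n). apply Rabs_lt_between in HN. lra. }
  destruct Hc as [l Hl]. exists l; split; auto. intros n.
  assert (Hlim : is_lim_seq (fun m => Rabs (rbox F m - rbox F n)) (Rabs (l - rbox F n))).
  { apply (is_lim_seq_abs _ (Finite (l - rbox F n))). apply is_lim_seq_minus'; auto. apply is_lim_seq_const. }
  rewrite Rabs_minus_sym.
  assert (Hle := is_lim_seq_le_loc (fun m => Rabs (rbox F m - rbox F n)) (fun _ => L - rbox M n) _ _
    (ltac:(exists n; intros m Hm; eapply Rle_trans; [apply rbox_diff; eauto|]; specialize (HLb m); lra))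
    Hlim (is_lim_seq_const _)).
  simpl in Hle. exact Hle.
Qed.

Lemma summ_conv M F : summ M -> (forall k1 k2 k3, Rabs (F k1 k2 k3) <= M k1 k2 k3) ->
  ex_finite_lim_seq (rbox F).
Proof. intros HM HF. destruct (summ_lim M HM) as [L [HL HLb]].
  destruct (conv_bound M F L (proj1 HM) HL HLb HF) as [l [Hl _]]. exists l; auto. Qed.

Lemma summ_CVU M (G : Z -> Z -> Z -> R -> R) (D : R -> Prop) : summ M ->
  (forall k1 k2 k3 s, D s -> Rabs (G k1 k2 k3 s) <= M k1 k2 k3) ->
  CVU_dom (fun n s => rbox (fun k1 k2 k3 => G k1 k2 k3 s) n) D.
Proof.
  intros HM HG. destruct (summ_lim M HM) as [L [HL HLb]].
  intros eps. pose proof HL as HL'. apply is_lim_seq_spec in HL. destruct (HL eps) as [N HN]. exists N. intros n Hn x Dx.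
  destruct (conv_bound M (fun k1 k2 k3 => G k1 k2 k3 x) L (proj1 HM) HL' HLb)
    as [l [Hl Hb]]. intros; apply HG; auto.
  replace (Lim_seq (fun n0 => rbox (fun k1 k2 k3 => G k1 k2 k3 x) n0)) with (Finite l) by (symmetry; apply (is_lim_seq_unique _ _ Hl)). simpl.
  eapply Rle_lt_trans; [apply Hb|]. specialize (HN n Hn). apply Rabs_lt_between in HN. lra.
Qed.

Lemma is_derive_rsum {A} (l : list A) (f : A -> R -> R) f' s0 :
  (forall x, is_derive (f x) s0 (f' x)) ->
  is_derive (fun s => rsum l (fun x => f x s)) s0 (rsum l f').
Proof.
  intros H. induction l; simpl.
  - exact (is_derive_const (K:=R_AbsRing) (V:=R_NormedModule) 0 s0).
  - apply (is_derive_plus (f a) (fun s => rsum l (fun x => f x s))); auto.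
Qed.

Lemma continuity_rsum {A} (l : list A) (f : A -> R -> R) s0 :
  (forall x, continuity_pt (f x) s0) -> continuity_pt (fun s => rsum l (fun x => f x s)) s0.
Proof.
  intros H. induction l; simpl.
  - apply continuity_pt_const. intros ? ?; reflexivity.
  - apply (continuity_pt_plus (f a) (fun s => rsum l (fun x => f x s))); auto.
Qed.

Lemma is_derive_rbox (F F' : Z -> Z -> Z -> R -> R) n s0 :
  (forall k1 k2 k3, is_derive (F k1 k2 k3) s0 (F' k1 k2 k3 s0)) ->
  is_derive (fun s => rbox (fun k1 k2 k3 => F k1 k2 k3 s) n) s0 (rbox (fun k1 k2 k3 => F' k1 k2 k3 s0) n).
Proof.
  intros H. unfold rbox, rsum3.
  apply (is_derive_rsum _ (fun k1 s => rsum (Ib n) (fun k2 => rsum (Ib n) (fun k3 => F k1 k2 k3 s)))).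
  intros k1. apply (is_derive_rsum _ (fun k2 s => rsum (Ib n) (fun k3 => F k1 k2 k3 s))).
  intros k2. apply (is_derive_rsum _ (fun k3 s => F k1 k2 k3 s)). intros k3. apply H.
Qed.

Lemma continuity_rbox (F : Z -> Z -> Z -> R -> R) n s0 :
  (forall k1 k2 k3, continuity_pt (F k1 k2 k3) s0) ->
  continuity_pt (fun s => rbox (fun k1 k2 k3 => F k1 k2 k3 s) n) s0.
Proof.
  intros H. unfold rbox, rsum3.
  apply (continuity_rsum _ (fun k1 s => rsum (Ib n) (fun k2 => rsum (Ib n) (fun k3 => F k1 k2 k3 s)))).
  intros k1. apply (continuity_rsum _ (fun k2 s => rsum (Ib n) (fun k3 => F k1 k2 k3 s))).
  intros k2. apply (continuity_rsum _ (fun k3 s => F k1 k2 k3 s)). intros k3. apply H.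
Qed.

Lemma CVU_dom_ext (f g : nat -> R -> R) D : (forall n x, D x -> f n x = g n x) -> CVU_dom f D -> CVU_dom g D.
Proof.
  intros He H eps. destruct (H eps) as [N HN]. exists N. intros n Hn x Dx.
  rewrite <- He by auto. rewrite <- (Lim_seq_ext (fun n0 => f n0 x)). apply HN; auto.
  intros; apply He; auto.
Qed.

Lemma GL (F F' : Z -> Z -> Z -> R -> R) (M : Z -> Z -> Z -> R) (s0 dl : R) :
  0 < dl ->
  (forall k1 k2 k3 s, s0 - dl < s < s0 + dl -> is_derive (F k1 k2 k3) s (F' k1 k2 k3 s)) ->
  (forall k1 k2 k3 s, s0 - dl < s < s0 + dl -> continuity_pt (F' k1 k2 k3) s) ->
  (forall k1 k2 k3 s, s0 - dl < s < s0 + dl -> Rabs (F k1 k2 k3 s) <= M k1 k2 k3) ->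
  (forall k1 k2 k3 s, s0 - dl < s < s0 + dl -> Rabs (F' k1 k2 k3 s) <= M k1 k2 k3) ->
  summ M ->
  is_derive (fun s => real (Lim_seq (fun n => rbox (fun k1 k2 k3 => F k1 k2 k3 s) n))) s0
    (real (Lim_seq (fun n => rbox (fun k1 k2 k3 => F' k1 k2 k3 s0) n))).
Proof.
  intros Hdl Hd Hc HF HF' HM.
  set (D := fun s => s0 - dl < s /\ s < s0 + dl).
  assert (HDo : open D). { apply open_and; [apply open_gt|apply open_lt]. }
  assert (Hloc : forall x, D x -> locally x D). { intros x Dx. apply HDo; auto. }
  assert (Hder : forall n x, D x -> is_derive (fun s => rbox (fun k1 k2 k3 => F k1 k2 k3 s) n) x
                   (rbox (fun k1 k2 k3 => F' k1 k2 k3 x) n)).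
  { intros n x Dx. apply (is_derive_rbox F F'). intros; apply Hd; auto. }
  assert (HDer : forall n x, D x -> Derive (fun s => rbox (fun k1 k2 k3 => F k1 k2 k3 s) n) x =
                   rbox (fun k1 k2 k3 => F' k1 k2 k3 x) n).
  { intros; apply is_derive_unique; auto. }
  pose proof (CVU_Derive (fun n s => rbox (fun k1 k2 k3 => F k1 k2 k3 s) n) D HDo) as HC.
  assert (Hs0 : D s0) by (unfold D; lra).
  specialize (HC ltac:(intros a b x Da Db Hx; unfold D in *; lra)
    (summ_CVU M F D HM ltac:(intros; apply HF; auto))
    ltac:(intros n x Dx; eexists; apply Hder; auto)).
  specialize (HC ltac:(intros n x Dx;
     apply (continuity_pt_ext_loc (fun s => rbox (fun k1 k2 k3 => F' k1 k2 k3 s) n));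
     [ apply (filter_imp D); [intros y Dy; symmetry; apply HDer; auto | apply Hloc; auto]
     | apply continuity_rbox; intros; apply Hc; auto ])).
  specialize (HC ltac:(apply (CVU_dom_ext (fun n s => rbox (fun k1 k2 k3 => F' k1 k2 k3 s) n));
     [intros n x Dx; symmetry; apply HDer; auto | apply summ_CVU with M; auto; intros; apply HF'; auto])).
  specialize (HC s0 Hs0).
  rewrite (Lim_seq_ext _ (fun n => Derive (fun s => rbox (fun k1 k2 k3 => F k1 k2 k3 s) n) s0)).
  exact HC. intros n; symmetry; apply HDer; auto.
Qed.

Definition reF (f : Z -> Z -> Z -> C) := fun k1 k2 k3 => Re (f k1 k2 k3).
Definition imF (f : Z -> Z -> Z -> C) := fun k1 k2 k3 => Im (f k1 k2 k3).

Lemma Re_box f n : Re (box_sum f n) = rbox (reF f) n.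
Proof. unfold box_sum, rbox, rsum3, Ib, reF. rewrite Re_csum. apply rsum_ext; intros.
  rewrite Re_csum. apply rsum_ext; intros. rewrite Re_csum. reflexivity. Qed.
Lemma Im_box f n : Im (box_sum f n) = rbox (imF f) n.
Proof. unfold box_sum, rbox, rsum3, Ib, imF. rewrite Im_csum. apply rsum_ext; intros.
  rewrite Im_csum. apply rsum_ext; intros. rewrite Im_csum. reflexivity. Qed.

Lemma ls_eq f : lattice_sum f = (real (Lim_seq (rbox (reF f))), real (Lim_seq (rbox (imF f)))).
Proof. unfold lattice_sum. f_equal; f_equal; apply Lim_seq_ext; intros; [apply Re_box|apply Im_box]. Qed.

Definition ls_conv (f : Z -> Z -> Z -> C) : Prop :=
  ex_finite_lim_seq (rbox (reF f)) /\ ex_finite_lim_seq (rbox (imF f)).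

Lemma ls_ext f g : (forall k1 k2 k3, f k1 k2 k3 = g k1 k2 k3) -> lattice_sum f = lattice_sum g.
Proof. intros H. rewrite !ls_eq. f_equal; f_equal; apply Lim_seq_ext; intros n;
  unfold rbox, rsum3, reF, imF; apply rsum_ext; intros; apply rsum_ext; intros; apply rsum_ext; intros; rewrite H; auto. Qed.

Lemma rbox_lin a b F G n : rbox (fun k1 k2 k3 => a * F k1 k2 k3 + b * G k1 k2 k3) n = a * rbox F n + b * rbox G n.
Proof. unfold rbox, rsum3. rewrite <- !rsum_scal, <- rsum_plus. apply rsum_ext; intros.
  rewrite <- !rsum_scal, <- rsum_plus. apply rsum_ext; intros.
  rewrite <- !rsum_scal, <- rsum_plus. apply rsum_ext; intros. reflexivity. Qed.

Lemma rbox_ext F G n : (forall k1 k2 k3, F k1 k2 k3 = G k1 k2 k3) -> rbox F n = rbox G n.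
Proof. intros H; unfold rbox, rsum3; apply rsum_ext; intros; apply rsum_ext; intros; apply rsum_ext; intros; auto. Qed.
Lemma rbox_lin4 a b c d F G H J n : rbox (fun k1 k2 k3 => a * F k1 k2 k3 + b * G k1 k2 k3 + (c * H k1 k2 k3 + d * J k1 k2 k3)) n
   = a * rbox F n + b * rbox G n + (c * rbox H n + d * rbox J n).
Proof. transitivity (rbox (fun k1 k2 k3 => 1 * (a * F k1 k2 k3 + b * G k1 k2 k3) + 1 * (c * H k1 k2 k3 + d * J k1 k2 k3)) n).
  apply rbox_ext; intros; ring. rewrite rbox_lin, !rbox_lin. ring. Qed.

Lemma lim_lin a b u v : ex_finite_lim_seq u -> ex_finite_lim_seq v ->
  is_lim_seq (fun n => a * u n + b * v n) (a * real (Lim_seq u) + b * real (Lim_seq v)).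
Proof. intros [lu Hu] [lv Hv]. rewrite (is_lim_seq_unique _ _ Hu), (is_lim_seq_unique _ _ Hv). simpl.
  apply is_lim_seq_plus'; [apply (is_lim_seq_scal_l u a lu)|apply (is_lim_seq_scal_l v b lv)]; auto. Qed.

Lemma reF_lin a b f g c d : (forall k1 k2 k3, Re (a * f k1 k2 k3 + b * g k1 k2 k3)%C = c * reF f k1 k2 k3 + d * imF f k1 k2 k3) -> True.
Proof. auto. Qed.

Lemma ls_lin (a b : C) f g : ls_conv f -> ls_conv g ->
  lattice_sum (fun k1 k2 k3 => a * f k1 k2 k3 + b * g k1 k2 k3)%C =
  (a * lattice_sum f + b * lattice_sum g)%C /\
  ls_conv (fun k1 k2 k3 => a * f k1 k2 k3 + b * g k1 k2 k3)%C.
Proof.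
  intros [Hf1 Hf2] [Hg1 Hg2]. rewrite !ls_eq.
  destruct a as [a1 a2], b as [b1 b2].
  assert (E1 : forall n, rbox (reF (fun k1 k2 k3 => (a1,a2) * f k1 k2 k3 + (b1,b2) * g k1 k2 k3)%C) n =
     (a1 * rbox (reF f) n + (-a2) * rbox (imF f) n) + (b1 * rbox (reF g) n + (-b2) * rbox (imF g) n)).
  { intros n. rewrite <- rbox_lin4. apply rbox_ext; intros. unfold reF, imF. destruct (f k1 k2 k3), (g k1 k2 k3). simpl. ring. }
  assert (E2 : forall n, rbox (imF (fun k1 k2 k3 => (a1,a2) * f k1 k2 k3 + (b1,b2) * g k1 k2 k3)%C) n =
     (a2 * rbox (reF f) n + a1 * rbox (imF f) n) + (b2 * rbox (reF g) n + b1 * rbox (imF g) n)).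
  { intros n. rewrite <- rbox_lin4. apply rbox_ext; intros. unfold reF, imF. destruct (f k1 k2 k3), (g k1 k2 k3). simpl. ring. }
  pose proof (lim_lin a1 (-a2) _ _ Hf1 Hf2) as L1. pose proof (lim_lin b1 (-b2) _ _ Hg1 Hg2) as L2.
  pose proof (lim_lin a2 a1 _ _ Hf1 Hf2) as L3. pose proof (lim_lin b2 b1 _ _ Hg1 Hg2) as L4.
  pose proof (is_lim_seq_plus' _ _ _ _ L1 L2) as LR. pose proof (is_lim_seq_plus' _ _ _ _ L3 L4) as LI.
  rewrite (Lim_seq_ext _ _ E1), (Lim_seq_ext _ _ E2).
  rewrite (is_lim_seq_unique _ _ LR), (is_lim_seq_unique _ _ LI). split.
  - simpl. unfold Cplus, Cmult; simpl. f_equal; ring.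
  - split; eexists; [eapply is_lim_seq_ext; [|apply LR]|eapply is_lim_seq_ext; [|apply LI]]; intros; symmetry; [apply E1|apply E2].
Qed.

Lemma real_Rbar_mult (r : R) (x : Rbar) : real (Rbar_mult r x) = r * real x.
Proof. destruct x as [x| |]; simpl; [reflexivity| |];
  unfold Rbar_mult, Rbar_mult'; destruct (Rle_dec 0 r) as [H|H]; try destruct (Rle_lt_or_eq_dec 0 r H);
  simpl; ring. Qed.

Lemma rbox_scal c F n : rbox (fun k1 k2 k3 => c * F k1 k2 k3) n = c * rbox F n.
Proof. unfold rbox, rsum3. rewrite <- rsum_scal. apply rsum_ext; intros. rewrite <- rsum_scal.
  apply rsum_ext; intros. rewrite <- rsum_scal. reflexivity. Qed.

Lemma ls_rscal (r : R) f : (RtoC r * lattice_sum f)%C = lattice_sum (fun k1 k2 k3 => RtoC r * f k1 k2 k3)%C.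
Proof.
  rewrite !ls_eq.
  rewrite (Lim_seq_ext (rbox (reF (fun k1 k2 k3 => RtoC r * f k1 k2 k3)%C)) (fun n => r * rbox (reF f) n)).
  rewrite (Lim_seq_ext (rbox (imF (fun k1 k2 k3 => RtoC r * f k1 k2 k3)%C)) (fun n => r * rbox (imF f) n)).
  rewrite !Lim_seq_scal_l, !real_Rbar_mult. unfold Cmult, RtoC; simpl. f_equal; ring.
  - intros n. rewrite <- rbox_scal. apply rbox_ext; intros. unfold imF, reF. destruct (f k1 k2 k3); simpl. ring.
  - intros n. rewrite <- rbox_scal. apply rbox_ext; intros. unfold imF, reF. destruct (f k1 k2 k3); simpl. ring.
Qed.

Lemma ls_conj f : Cconj (lattice_sum f) = lattice_sum (fun k1 k2 k3 => Cconj (f k1 k2 k3)).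
Proof.
  rewrite !ls_eq.
  rewrite (Lim_seq_ext (rbox (imF (fun k1 k2 k3 => Cconj (f k1 k2 k3)))) (fun n => - rbox (imF f) n)).
  rewrite Lim_seq_opp. unfold Cconj; simpl. f_equal.
  - destruct (Lim_seq (rbox (imF f))); simpl; ring.
  - intros n. rewrite <- (Rmult_1_l (rbox (imF f) n)). rewrite Ropp_mult_distr_l.
    rewrite <- rbox_scal. apply rbox_ext; intros. unfold imF, reF. destruct (f k1 k2 k3); simpl. ring.
Qed.

Lemma ls_conv_bound M f : summ M -> (forall k1 k2 k3, Rabs (Re (f k1 k2 k3)) <= M k1 k2 k3) ->
  (forall k1 k2 k3, Rabs (Im (f k1 k2 k3)) <= M k1 k2 k3) -> ls_conv f.
Proof. intros HM H1 H2; split; eapply summ_conv; eauto. Qed.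

Definition cderiv (f : R -> C) (s : R) (l : C) : Prop :=
  is_derive (fun t => Re (f t)) s (Re l) /\ is_derive (fun t => Im (f t)) s (Im l).

Lemma dR_cderiv f s l : cderiv f s l -> dR f s = l.
Proof. intros [H1 H2]. unfold dR. apply is_derive_unique in H1. apply is_derive_unique in H2.
  simpl in *. rewrite H1, H2. destruct l; reflexivity. Qed.

Lemma dR_ext_loc f g s : locally s (fun t => f t = g t) -> dR f s = dR g s.
Proof. intros H. unfold dR. f_equal; apply Derive_ext_loc; eapply filter_imp; try exact H;
  intros t Ht; simpl; rewrite Ht; reflexivity. Qed.

Lemma cderiv_csum {A} (l : list A) (f : A -> R -> C) f' s :
  (forall x, cderiv (f x) s (f' x)) -> cderiv (fun t => csum l (fun x => f x t)) s (csum l f').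
Proof.
  intros H. split.
  - rewrite Re_csum. apply (is_derive_ext (fun t => rsum l (fun x => Re (f x t)))).
    intros t; rewrite Re_csum; reflexivity. apply (is_derive_rsum l (fun x t => Re (f x t))). intros; apply H.
  - rewrite Im_csum. apply (is_derive_ext (fun t => rsum l (fun x => Im (f x t)))).
    intros t; rewrite Im_csum; reflexivity. apply (is_derive_rsum l (fun x t => Im (f x t))). intros; apply H.
Qed.

Lemma cderiv_cmul (c : C) f s l : cderiv f s l -> cderiv (fun t => c * f t)%C s (c * l)%C.
Proof.
  intros [H1 H2]. destruct c as [c1 c2]. split; simpl.
  - apply (is_derive_minus (fun t => c1 * Re (f t)) (fun t => c2 * Im (f t)));
    apply is_derive_scal; auto.
  - apply (is_derive_plus (fun t => c1 * Im (f t)) (fun t => c2 * Re (f t)));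
    apply is_derive_scal; auto.
Qed.

Lemma cderiv_const (c : C) s : cderiv (fun _ => c) s 0%C.
Proof. split; simpl; exact (is_derive_const (K:=R_AbsRing) (V:=R_NormedModule) _ s). Qed.

Lemma GLC (f f' : Z -> Z -> Z -> R -> C) (M : Z -> Z -> Z -> R) (s0 dl : R) :
  0 < dl ->
  (forall k1 k2 k3 s, s0 - dl < s < s0 + dl -> cderiv (f k1 k2 k3) s (f' k1 k2 k3 s)) ->
  (forall k1 k2 k3 s, s0 - dl < s < s0 + dl -> continuity_pt (fun t => Re (f' k1 k2 k3 t)) s) ->
  (forall k1 k2 k3 s, s0 - dl < s < s0 + dl -> continuity_pt (fun t => Im (f' k1 k2 k3 t)) s) ->
  (forall k1 k2 k3 s, s0 - dl < s < s0 + dl -> Rabs (Re (f k1 k2 k3 s)) <= M k1 k2 k3) ->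
  (forall k1 k2 k3 s, s0 - dl < s < s0 + dl -> Rabs (Im (f k1 k2 k3 s)) <= M k1 k2 k3) ->
  (forall k1 k2 k3 s, s0 - dl < s < s0 + dl -> Rabs (Re (f' k1 k2 k3 s)) <= M k1 k2 k3) ->
  (forall k1 k2 k3 s, s0 - dl < s < s0 + dl -> Rabs (Im (f' k1 k2 k3 s)) <= M k1 k2 k3) ->
  summ M ->
  cderiv (fun s => lattice_sum (fun k1 k2 k3 => f k1 k2 k3 s)) s0 (lattice_sum (fun k1 k2 k3 => f' k1 k2 k3 s0))
  /\ ls_conv (fun k1 k2 k3 => f' k1 k2 k3 s0)
  /\ ls_conv (fun k1 k2 k3 => f k1 k2 k3 s0).
Proof.
  intros Hdl Hd Hc1 Hc2 Hb1 Hb2 Hb3 Hb4 HM.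
  assert (Hs0 : s0 - dl < s0 < s0 + dl) by lra.
  split; [|split; apply ls_conv_bound with M; auto].
  split.
  - apply (is_derive_ext (fun s => real (Lim_seq (fun n => rbox (fun k1 k2 k3 => Re (f k1 k2 k3 s)) n)))).
    intros t. rewrite ls_eq. reflexivity.
    rewrite ls_eq. simpl.
    apply (GL (fun k1 k2 k3 s => Re (f k1 k2 k3 s)) (fun k1 k2 k3 s => Re (f' k1 k2 k3 s)) M s0 dl); auto.
    intros; apply Hd; auto.
  - apply (is_derive_ext (fun s => real (Lim_seq (fun n => rbox (fun k1 k2 k3 => Im (f k1 k2 k3 s)) n)))).
    intros t. rewrite ls_eq. reflexivity.
    rewrite ls_eq. simpl.
    apply (GL (fun k1 k2 k3 s => Im (f k1 k2 k3 s)) (fun k1 k2 k3 s => Im (f' k1 k2 k3 s)) M s0 dl); auto.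
    intros; apply Hd; auto.
Qed.

Lemma exp_mono x y : x <= y -> exp x <= exp y.
Proof. intros [H|H]; [left; apply exp_increasing; auto| subst; lra]. Qed.

(* 1D telescoping bound *)
Section OneD.
Variable c : R.
Hypothesis Hc : 0 < c.
Let r := exp (- c).
Lemma r_pos : 0 < r. Proof. apply exp_pos. Qed.
Lemma r_lt1 : r < 1.
Proof. unfold r. rewrite <- exp_0. apply exp_increasing. lra. Qed.
Definition Gt (k : Z) : R :=
  if Z.leb k 0 then r / (1 - r) * exp (c * IZR k) else (1 + r) / (1 - r) - exp (- c * IZR k) / (1 - r).

Lemma Gt_step k : exp (- c * IZR k * IZR k) <= Gt (k + 1) - Gt k.
Proof.
  pose proof r_pos as Hr. pose proof r_lt1 as Hr1.
  assert (Hrc : exp c * r = 1). { unfold r. rewrite <- exp_plus. replace (c + - c) with 0 by ring. apply exp_0. }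
  unfold Gt. destruct (Z.leb_spec (k+1) 0) as [H1|H1]; destruct (Z.leb_spec k 0) as [H2|H2]; try lia.
  -
    rewrite plus_IZR. replace (c * (IZR k + 1)) with (c * IZR k + c) by ring. rewrite exp_plus.
    replace (r / (1 - r) * (exp (c * IZR k) * exp c) - r / (1 - r) * exp (c * IZR k)) with
      (exp (c * IZR k) * ((exp c * r - r) / (1 - r))) by (field; lra).
    rewrite Hrc. unfold Rdiv. rewrite Rinv_r by lra. rewrite Rmult_1_r.
    apply exp_mono. assert (IZR k + 1 <= 0) by (rewrite <- plus_IZR; apply (IZR_le _ 0); lia).
    assert (0 <= IZR k * (IZR k + 1)) by nra. assert (0 <= c * (IZR k * (IZR k + 1))) by (apply Rmult_le_pos; lra). nra.
  -
    assert (k = 0)%Z by lia. subst. simpl. rewrite Rmult_0_r, Rmult_0_r, exp_0.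
    replace (- c * 1) with (-c) by ring. fold r.
    replace ((1 + r) / (1 - r) - r / (1 - r) - r / (1 - r) * 1) with 1 by (field; lra). lra.
  -
    rewrite plus_IZR. replace (- c * (IZR k + 1)) with (- c * IZR k + - c) by ring. rewrite exp_plus. fold r.
    replace ((1 + r) / (1 - r) - exp (- c * IZR k) * r / (1 - r) - ((1 + r) / (1 - r) - exp (- c * IZR k) / (1 - r)))
      with (exp (- c * IZR k)) by (field; lra).
    apply exp_mono. assert (1 <= IZR k) by (apply (IZR_le 1); lia).
    assert (0 <= IZR k * (IZR k - 1)) by nra. assert (0 <= c * (IZR k * (IZR k - 1))) by (apply Rmult_le_pos; lra). nra.
Qed.

Lemma Gt_bounds k : 0 <= Gt k <= (1 + r) / (1 - r).
Proof.
  pose proof r_pos as Hr. pose proof r_lt1 as Hr1.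
  unfold Gt. destruct (Z.leb_spec k 0).
  - assert (exp (c * IZR k) <= 1). { rewrite <- exp_0. apply exp_mono. assert (IZR k <= 0) by (apply (IZR_le _ 0); lia). nra. }
    pose proof (exp_pos (c * IZR k)). split.
    + apply Rmult_le_pos; [apply Rdiv_le_0_compat|]; lra.
    + assert (0 < / (1 - r)) by (apply Rinv_0_lt_compat; lra). unfold Rdiv.
      assert (r * exp (c * IZR k) <= 1 + r) by nra. nra.
  - assert (exp (- c * IZR k) <= 1). { rewrite <- exp_0. apply exp_mono. assert (1 <= IZR k) by (apply (IZR_le 1); lia). nra. }
    pose proof (exp_pos (- c * IZR k)). split.
    + replace ((1 + r) / (1 - r) - exp (- c * IZR k) / (1 - r)) with ((1 + r - exp (- c * IZR k)) / (1 - r)) by (field; lra).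
      apply Rdiv_le_0_compat; lra.
    + assert (0 <= exp (- c * IZR k) / (1 - r)) by (apply Rdiv_le_0_compat; lra). lra.
Qed.

Lemma sum1D lo len : rsum (zrange lo len) (fun k => exp (- c * IZR k * IZR k)) <= Gt (lo + Z.of_nat len) - Gt lo.
Proof.
  revert lo. induction len; intros lo.
  - simpl. replace (lo + 0)%Z with lo by lia. lra.
  - rewrite zrange_S. simpl rsum. specialize (IHlen (lo + 1)%Z). pose proof (Gt_step lo).
    replace (lo + 1 + Z.of_nat len)%Z with (lo + Z.of_nat (S len))%Z in IHlen by lia. lra.
Qed.

Lemma sum1D_bound lo len : rsum (zrange lo len) (fun k => exp (- c * IZR k * IZR k)) <= (1 + r) / (1 - r).
Proof. pose proof (sum1D lo len). pose proof (Gt_bounds (lo + Z.of_nat len)). pose proof (Gt_bounds lo). lra. Qed.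
End OneD.

Lemma gauss_summ (K c : R) : 0 <= K -> 0 < c ->
  summ (fun k1 k2 k3 => K * (exp (- c * IZR k1 * IZR k1) * exp (- c * IZR k2 * IZR k2) * exp (- c * IZR k3 * IZR k3))).
Proof.
  intros HK Hc. split.
  - intros. apply Rmult_le_pos; auto. pose proof (exp_pos (- c * IZR k1 * IZR k1)).
    pose proof (exp_pos (- c * IZR k2 * IZR k2)). pose proof (exp_pos (- c * IZR k3 * IZR k3)).
    apply Rmult_le_pos; [apply Rmult_le_pos|]; lra.
  - set (Bd := (1 + exp (- c)) / (1 - exp (- c))). exists (K * (Bd * (Bd * Bd))). intros n.
    unfold rbox, rsum3.
    set (g := fun k => exp (- c * IZR k * IZR k)).
    assert (Hg : forall k, 0 <= g k) by (intros; left; apply exp_pos).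
    assert (Hs : rsum (Ib n) g <= Bd) by (apply sum1D_bound; auto).
    assert (Hs0 : 0 <= rsum (Ib n) g) by (apply rsum_nonneg; auto).
    set (S := rsum (Ib n) g) in *.
    transitivity (K * (S * (S * S))).
    + right. transitivity (rsum (Ib n) (fun k1 => (K * S * S) * g k1)).
      * apply rsum_ext; intros k1. transitivity (rsum (Ib n) (fun k2 => (K * g k1 * S) * g k2)).
        -- apply rsum_ext; intros k2. transitivity (rsum (Ib n) (fun k3 => (K * g k1 * g k2) * g k3)).
           ++ apply rsum_ext; intros; unfold g; ring.
           ++ rewrite rsum_scal; fold S; ring.
        -- rewrite rsum_scal; fold S; ring.
      * rewrite rsum_scal; fold S; ring.
    + apply Rmult_le_compat_l; auto. apply Rmult_le_compat; auto; [apply Rmult_le_pos; auto|].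
      apply Rmult_le_compat; auto.
Qed.

Lemma pow_exp_le x b m : 0 <= x -> 0 < b -> x ^ m <= (/ b) ^ m * exp (b * INR m * x).
Proof.
  intros Hx Hb. induction m.
  - simpl. rewrite Rmult_0_r, Rmult_0_l, exp_0. lra.
  - rewrite S_INR. replace (b * (INR m + 1) * x) with (b * INR m * x + b * x) by ring.
    rewrite exp_plus. simpl.
    assert (x <= / b * exp (b * x)).
    { pose proof (exp_ineq1_le (b * x)). replace x with (/ b * (b * x)) at 1 by (field; lra).
      apply Rmult_le_compat_l; [left; apply Rinv_0_lt_compat; auto| lra]. }
    assert (0 <= x ^ m) by (apply pow_le; auto).
    replace (/ b * (/ b) ^ m * (exp (b * INR m * x) * exp (b * x))) with
      ((/ b * exp (b * x)) * ((/ b) ^ m * exp (b * INR m * x))) by ring.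
    apply Rmult_le_compat; auto.
Qed.

Lemma sq_shift (a D k : R) : 1 <= D * D -> k * k / 2 - a * a <= (a + D * k) * (a + D * k).
Proof. intros H. assert (0 <= (D * k + 2 * a) ^ 2) by apply pow2_ge_0.
  assert (k * k <= D * D * (k * k)). { assert (0 <= k * k) by nra. nra. }
  assert (E : (a + D * k) * (a + D * k) = (D * k + 2 * a) ^ 2 / 2 + D * D * (k * k) / 2 - a * a) by field.
  rewrite E. lra. Qed.

Lemma dominate (a b cc D N : Z) (eps alpha K : R) (m : nat) :
  D <> 0%Z -> (1 <= N)%Z -> 0 < eps -> 0 < alpha -> 0 <= K ->
  exists M, summ M /\ forall k1 k2 k3 t, 0 <= t ->
    eps * (IZR (a + D * k1) ^ 2 + IZR (b + 2 * N * D * k2) ^ 2 + IZR (cc + D * k3) ^ 2) <= t ->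
    K * (1 + t) ^ m * exp (- alpha * t) <= M k1 k2 k3.
Proof.
  intros HD HN He Ha HK.
  set (bb := alpha / (2 * (INR m + 1))).
  assert (Hbb : 0 < bb) by (unfold bb; apply Rdiv_lt_0_compat; [auto| pose proof (pos_INR m); lra]).
  set (Cm := (/ bb) ^ m * exp (alpha / 2)).
  set (g := alpha * eps / 2).
  assert (Hg : 0 < g) by (unfold g; nra).
  set (K' := K * Cm * exp (g * (IZR a ^ 2 + IZR b ^ 2 + IZR cc ^ 2))).
  assert (HCm : 0 <= Cm) by (unfold Cm; apply Rmult_le_pos; [apply pow_le; left; apply Rinv_0_lt_compat; auto | left; apply exp_pos]).
  assert (HK' : 0 <= K') by (unfold K'; apply Rmult_le_pos; [apply Rmult_le_pos; auto| left; apply exp_pos]).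
  exists (fun k1 k2 k3 => K' * (exp (- (g/2) * IZR k1 * IZR k1) * exp (- (g/2) * IZR k2 * IZR k2) * exp (- (g/2) * IZR k3 * IZR k3))).
  split. { apply gauss_summ; auto; lra. }
  intros k1 k2 k3 t Ht Het.
  assert (S1 : (1 + t) ^ m * exp (- alpha * t) <= Cm * exp (- (alpha / 2) * t)).
  { pose proof (pow_exp_le (1 + t) bb m ltac:(lra) Hbb) as P.
    assert (bb * INR m * (1 + t) <= alpha / 2 * (1 + t)).
    { apply Rmult_le_compat_r; [lra|]. unfold bb. pose proof (pos_INR m).
      apply Rmult_le_reg_r with (2 * (INR m + 1)); [lra|].
      field_simplify; [|lra]. nra. }
    apply Rle_trans with ((/ bb) ^ m * exp (alpha / 2 * (1 + t)) * exp (- alpha * t)).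
    - apply Rmult_le_compat_r; [left; apply exp_pos|]. eapply Rle_trans; [apply P|].
      apply Rmult_le_compat_l; [apply pow_le; left; apply Rinv_0_lt_compat; auto|]. apply exp_mono; auto.
    - unfold Cm. rewrite Rmult_assoc, <- exp_plus, Rmult_assoc, <- exp_plus. right. apply f_equal2; [reflexivity|]. apply f_equal. field. }
  assert (HDD : 1 <= IZR D * IZR D). { rewrite <- mult_IZR. apply (IZR_le 1). nia. }
  assert (HND : 1 <= (2 * IZR N * IZR D) * (2 * IZR N * IZR D)).
  { rewrite <- !mult_IZR. apply (IZR_le 1). nia. }
  assert (SA := sq_shift (IZR a) (IZR D) (IZR k1) HDD).
  assert (SB := sq_shift (IZR b) (2 * IZR N * IZR D) (IZR k2) HND).
  assert (SC := sq_shift (IZR cc) (IZR D) (IZR k3) HDD).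
  rewrite !plus_IZR, !mult_IZR in Het.
  assert (S2 : exp (- (alpha / 2) * t) <= exp (g * (IZR a ^ 2 + IZR b ^ 2 + IZR cc ^ 2)) *
      (exp (- (g/2) * IZR k1 * IZR k1) * exp (- (g/2) * IZR k2 * IZR k2) * exp (- (g/2) * IZR k3 * IZR k3))).
  { rewrite <- !exp_plus. apply exp_mono. unfold g.
    replace (IZR 2) with 2 in Het by reflexivity.
    assert (alpha * eps * (IZR k1 * IZR k1 / 2 - IZR a * IZR a + (IZR k2 * IZR k2 / 2 - IZR b * IZR b) +
       (IZR k3 * IZR k3 / 2 - IZR cc * IZR cc)) <= alpha * t).
    { apply Rle_trans with (alpha * (eps * ((IZR a + IZR D * IZR k1) ^ 2 + (IZR b + 2 * IZR N * IZR D * IZR k2) ^ 2 +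
        (IZR cc + IZR D * IZR k3) ^ 2))).
      - rewrite Rmult_assoc. apply Rmult_le_compat_l; [lra|]. apply Rmult_le_compat_l; [lra|]. simpl. nra.
      - apply Rmult_le_compat_l; lra. }
    nra. }
  unfold K'.
  apply Rle_trans with (K * (Cm * exp (- (alpha / 2) * t))).
  - rewrite Rmult_assoc. apply Rmult_le_compat_l; auto.
  - replace (K * Cm * exp (g * (IZR a ^ 2 + IZR b ^ 2 + IZR cc ^ 2)) *
      (exp (- (g / 2) * IZR k1 * IZR k1) * exp (- (g / 2) * IZR k2 * IZR k2) * exp (- (g / 2) * IZR k3 * IZR k3)))
      with (K * (Cm * (exp (g * (IZR a ^ 2 + IZR b ^ 2 + IZR cc ^ 2)) *
      (exp (- (g / 2) * IZR k1 * IZR k1) * exp (- (g / 2) * IZR k2 * IZR k2) * exp (- (g / 2) * IZR k3 * IZR k3))))) by ring.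
    apply Rmult_le_compat_l; auto. apply Rmult_le_compat_l; auto.
Qed.

Definition Pf (n A B Cc : R) x y := Cc * n * (x ^ 2 + y ^ 2) - B * x + A.
Definition Rqf (n A B Cc : R) x y := Cc * n * (x ^ 2 - y ^ 2) - B * x + A.
Definition Iqf (n A B Cc : R) x y := y * (2 * Cc * n * x - B).
Definition Sf (n A B Cc : R) x y := Pf n A B Cc x y ^ 2 + Rqf n A B Cc x y ^ 2 + Iqf n A B Cc x y ^ 2.
Definition Wf (n A B Cc : R) x y := Sf n A B Cc x y / (4 * n * y ^ 2).
Definition Qv (n A B Cc : R) := - B ^ 2 / (4 * n) + A * Cc.
Definition th (n d A B Cc : R) := 2 * PI * Qv n A B Cc / d.
Definition pv (n A B Cc : R) x y := - Pf n A B Cc x y / (sqrt n * y).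
Definition NL (n d A B Cc : R) x y u v : C :=
  (v * pv n A B Cc x y * exp (- 2 * PI * v * Wf n A B Cc x y / d) * cos (th n d A B Cc * u),
   v * pv n A B Cc x y * exp (- 2 * PI * v * Wf n A B Cc x y / d) * sin (th n d A B Cc * u)).

Lemma cexp_form (q u v : R) : cexp (2 * PI * Ci * RtoC q * (u, v))%C =
  (exp (- 2 * PI * q * v) * cos (2 * PI * q * u), exp (- 2 * PI * q * v) * sin (2 * PI * q * u)).
Proof. unfold cexp, Cmult, RtoC, Ci; simpl. f_equal; f_equal; try f_equal; ring. Qed.

Lemma sqrt_sq_eq (n : R) : 0 <= n -> sqrt n * sqrt n = n.
Proof. intros; apply sqrt_sqrt; auto. Qed.

Lemma pz_eq N a b c x y : (1 <= N)%Z -> 0 < y ->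
  p_z N (x, y) (lamL' N a b c) = pv (IZR N) (IZR a) (IZR b) (IZR c) x y.
Proof. intros HN Hy. assert (Hn : 0 < IZR N) by (apply (IZR_lt 0); lia).
  pose proof (sqrt_lt_R0 _ Hn).
  unfold p_z, bil, tr_mul, lamL', lam_z, pv, Pf; simpl. field; repeat split; lra. Qed.

Lemma QD_eq N D a b c : (1 <= N)%Z -> D <> 0%Z -> QD N D (lamL' N a b c) = Qv (IZR N) (IZR a) (IZR b) (IZR c) / IZR (Z.abs D).
Proof. intros HN HD. assert (Hn : 0 < IZR N) by (apply (IZR_lt 0); lia).
  assert (Hd : 0 < IZR (Z.abs D)) by (apply (IZR_lt 0); lia).
  unfold QD, Qf, det2, lamL', Qv; simpl. field; repeat split; lra. Qed.

Lemma Rf_eq N a b c x y : (1 <= N)%Z -> 0 < y ->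
  Rf N (lamL' N a b c) (x, y) = pv (IZR N) (IZR a) (IZR b) (IZR c) x y ^ 2 / 2 - 2 * Qv (IZR N) (IZR a) (IZR b) (IZR c).
Proof. intros HN Hy. unfold Rf. rewrite pz_eq by auto. assert (Hn : 0 < IZR N) by (apply (IZR_lt 0); lia).
  unfold bil, tr_mul, lamL', Qv; simpl. field; repeat split; lra. Qed.

Lemma W_eq n A B Cc x y : 0 < n -> 0 < y ->
  pv n A B Cc x y ^ 2 / 2 - Qv n A B Cc = Wf n A B Cc x y.
Proof. intros Hn Hy. pose proof (sqrt_lt_R0 _ Hn). unfold pv, Qv, Wf, Sf, Pf, Rqf, Iqf.
  replace (sqrt n) with (sqrt n) by reflexivity.
  assert (E : (sqrt n) ^ 2 = n) by (simpl; rewrite Rmult_1_r; apply sqrt_sqrt; lra).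
  field_simplify; try (split; lra). rewrite E. field. lra.
Qed.

Lemma conv_L N D a b c u v x y : (1 <= N)%Z -> D <> 0%Z -> 0 < v -> 0 < y ->
  (RtoC (sqrt v) * phi N D a b c (u, v) (x, y))%C =
  NL (IZR N) (IZR (Z.abs D)) (IZR a) (IZR b) (IZR c) x y u v.
Proof.
  intros HN HD Hv Hy. assert (Hn : 0 < IZR N) by (apply (IZR_lt 0); lia).
  assert (Hd : 0 < IZR (Z.abs D)) by (apply (IZR_lt 0); lia).
  unfold phi. simpl Im. rewrite QD_eq, cexp_form, pz_eq, Rf_eq by auto.
  unfold NL, th. rewrite <- (W_eq (IZR N)) by auto.
  unfold Cmult, RtoC; simpl.
  set (q := Qv (IZR N) (IZR a) (IZR b) (IZR c)). set (p := pv (IZR N) (IZR a) (IZR b) (IZR c) x y).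
  set (dd := IZR (Z.abs D)) in *.
  assert (Es : sqrt v * sqrt v = v) by (apply sqrt_sqrt; lra).
  assert (Ee : exp (- 2 * PI * (q / dd) * v) * exp (-2 * PI * v * (p ^ 2 / 2 - 2 * q) / dd) =
     exp (-2 * PI * v * (p ^ 2 / 2 - q) / dd)) by (rewrite <- exp_plus; f_equal; field; lra).
  replace (2 * PI * (q / dd) * u) with (2 * PI * q / dd * u) by (field; lra).
  change (p * (p * 1)) with (p ^ 2). apply f_equal2.
  - transitivity ((sqrt v * sqrt v) * p * (exp (- 2 * PI * (q / dd) * v) * exp (-2 * PI * v * (p ^ 2 / 2 - 2 * q) / dd)) * cos (2 * PI * q / dd * u)); [ring|].
    rewrite Es, Ee. ring.
  - transitivity ((sqrt v * sqrt v) * p * (exp (- 2 * PI * (q / dd) * v) * exp (-2 * PI * v * (p ^ 2 / 2 - 2 * q) / dd)) * sin (2 * PI * q / dd * u)); [ring|].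
    rewrite Es, Ee. ring.
Qed.

Definition NR (n d A B Cc : R) x y u v : C :=
  (- sqrt v / (4 * n * y ^ 2) * exp (- 2 * PI * v * Wf n A B Cc x y / d) *
     (Rqf n A B Cc x y * cos (th n d A B Cc * u) + Iqf n A B Cc x y * sin (th n d A B Cc * u)),
   - sqrt v / (4 * n * y ^ 2) * exp (- 2 * PI * v * Wf n A B Cc x y / d) *
     (Iqf n A B Cc x y * cos (th n d A B Cc * u) - Rqf n A B Cc x y * sin (th n d A B Cc * u))).

Lemma conv_R N D a b c u v x y : (1 <= N)%Z -> D <> 0%Z -> 0 < v -> 0 < y ->
  Cconj (RtoC (sqrt v) * phiSh N D a b c (u, v) (x, y))%C =
  NR (IZR N) (IZR (Z.abs D)) (IZR a) (IZR b) (IZR c) x y u v.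
Proof.
  intros HN HD Hv Hy. assert (Hn : 0 < IZR N) by (apply (IZR_lt 0); lia).
  assert (Hd : 0 < IZR (Z.abs D)) by (apply (IZR_lt 0); lia).
  unfold phiSh. simpl Im. rewrite QD_eq, cexp_form, Rf_eq by auto.
  unfold NR, th. rewrite <- (W_eq (IZR N)) by auto.
  set (q := Qv (IZR N) (IZR a) (IZR b) (IZR c)). set (p := pv (IZR N) (IZR a) (IZR b) (IZR c) x y).
  set (dd := IZR (Z.abs D)) in *.
  replace (2 * PI * (q / dd) * u) with (2 * PI * q / dd * u) by (field; lra).
  assert (Ee : exp (-2 * PI * v * (p ^ 2 / 2 - q) / dd) = exp (- 2 * PI * (q / dd) * v) * exp (-2 * PI * v * (p ^ 2 / 2 - 2 * q) / dd))
     by (rewrite <- exp_plus; f_equal; field; lra).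
  rewrite Ee.
  set (e1 := exp (- 2 * PI * (q / dd) * v)). set (e2 := exp (-2 * PI * v * (p ^ 2 / 2 - 2 * q) / dd)).
  set (cs := cos (2 * PI * q / dd * u)). set (sn := sin (2 * PI * q / dd * u)).
  unfold Rqf, Iqf.
  unfold Cconj, Cmult, Cdiv, Cinv, Cminus, Cplus, Copp, RtoC; simpl.
  apply f_equal2; field; repeat split; try lra; nra.
Qed.

Definition NLu' (n d A B Cc : R) x y u v : C :=
  (- (v * pv n A B Cc x y * exp (- 2 * PI * v * Wf n A B Cc x y / d) * th n d A B Cc * sin (th n d A B Cc * u)),
   v * pv n A B Cc x y * exp (- 2 * PI * v * Wf n A B Cc x y / d) * th n d A B Cc * cos (th n d A B Cc * u)).
Definition NLv' (n d A B Cc : R) x y u v : C :=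
  (pv n A B Cc x y * (1 - 2 * PI * v * Wf n A B Cc x y / d) * exp (- 2 * PI * v * Wf n A B Cc x y / d) * cos (th n d A B Cc * u),
   pv n A B Cc x y * (1 - 2 * PI * v * Wf n A B Cc x y / d) * exp (- 2 * PI * v * Wf n A B Cc x y / d) * sin (th n d A B Cc * u)).

Lemma cont_of_der (f : R -> R) x : ex_derive f x -> continuity_pt f x.
Proof. intros H. apply continuity_pt_filterlim. apply (ex_derive_continuous f x H). Qed.

Lemma der_NLu n d A B Cc x y v u : 0 < n -> 0 < d -> y <> 0 ->
  cderiv (fun s => NL n d A B Cc x y s v) u (NLu' n d A B Cc x y u v).
Proof. intros Hn Hd Hy. split; simpl; auto_derive; auto; ring. Qed.

Lemma der_NLv n d A B Cc x y u v : 0 < n -> 0 < d -> y <> 0 ->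
  cderiv (fun s => NL n d A B Cc x y u s) v (NLv' n d A B Cc x y u v).
Proof. intros Hn Hd Hy. split; simpl; auto_derive; auto; unfold Rdiv; ring. Qed.

Lemma cont_NLu n d A B Cc x y v u : 0 < n -> 0 < d -> y <> 0 ->
  continuity_pt (fun s => Re (NLu' n d A B Cc x y s v)) u /\ continuity_pt (fun s => Im (NLu' n d A B Cc x y s v)) u.
Proof. intros Hn Hd Hy. split; apply cont_of_der; simpl; auto_derive; auto. Qed.

Lemma cont_NLv n d A B Cc x y u v : 0 < n -> 0 < d -> y <> 0 ->
  continuity_pt (fun s => Re (NLv' n d A B Cc x y u s)) v /\ continuity_pt (fun s => Im (NLv' n d A B Cc x y u s)) v.
Proof. intros Hn Hd Hy. split; apply cont_of_der; simpl; auto_derive; auto. Qed.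



Definition Kf (n v : R) y := - sqrt v / (4 * n * y ^ 2).
Definition Ef (n d A B Cc v : R) x y := exp (- 2 * PI * v * Wf n A B Cc x y / d).
Definition Uf (n d A B Cc u : R) x y := Rqf n A B Cc x y * cos (th n d A B Cc * u) + Iqf n A B Cc x y * sin (th n d A B Cc * u).
Definition Vf (n d A B Cc u : R) x y := Iqf n A B Cc x y * cos (th n d A B Cc * u) - Rqf n A B Cc x y * sin (th n d A B Cc * u).
Definition Pxf (n A B Cc : R) (x y : R) := 2 * Cc * n * x - B.
Definition Iqxf (n A B Cc : R) (x y : R) := 2 * Cc * n * y.
Definition Wxf (n A B Cc : R) x y :=
  (2 * Pf n A B Cc x y * Pxf n A B Cc x y + 2 * Rqf n A B Cc x y * Pxf n A B Cc x y
   + 2 * Iqf n A B Cc x y * Iqxf n A B Cc x y) / (4 * n * y ^ 2).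
Definition Wyf (n A B Cc : R) x y :=
  (2 * Pf n A B Cc x y * Iqxf n A B Cc x y - 2 * Rqf n A B Cc x y * Iqxf n A B Cc x y
   + 2 * Iqf n A B Cc x y * Pxf n A B Cc x y) / (4 * n * y ^ 2) - 2 * Sf n A B Cc x y / (4 * n * y ^ 3).
Definition Uxf (n d A B Cc u : R) x y := Pxf n A B Cc x y * cos (th n d A B Cc * u) + Iqxf n A B Cc x y * sin (th n d A B Cc * u).
Definition Vxf (n d A B Cc u : R) x y := Iqxf n A B Cc x y * cos (th n d A B Cc * u) - Pxf n A B Cc x y * sin (th n d A B Cc * u).
Definition Uyf (n d A B Cc u : R) x y := - Iqxf n A B Cc x y * cos (th n d A B Cc * u) + Pxf n A B Cc x y * sin (th n d A B Cc * u).
Definition Vyf (n d A B Cc u : R) x y := Pxf n A B Cc x y * cos (th n d A B Cc * u) + Iqxf n A B Cc x y * sin (th n d A B Cc * u).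
Definition Kyf (n v : R) y := sqrt v / (2 * n * y ^ 3).

Definition NRx' (n d A B Cc : R) x y u v : C :=
  (Kf n v y * Ef n d A B Cc v x y * (Uxf n d A B Cc u x y - 2 * PI * v / d * Wxf n A B Cc x y * Uf n d A B Cc u x y),
   Kf n v y * Ef n d A B Cc v x y * (Vxf n d A B Cc u x y - 2 * PI * v / d * Wxf n A B Cc x y * Vf n d A B Cc u x y)).
Definition NRy' (n d A B Cc : R) x y u v : C :=
  (Kyf n v y * Ef n d A B Cc v x y * Uf n d A B Cc u x y +
   Kf n v y * Ef n d A B Cc v x y * (Uyf n d A B Cc u x y - 2 * PI * v / d * Wyf n A B Cc x y * Uf n d A B Cc u x y),
   Kyf n v y * Ef n d A B Cc v x y * Vf n d A B Cc u x y +
   Kf n v y * Ef n d A B Cc v x y * (Vyf n d A B Cc u x y - 2 * PI * v / d * Wyf n A B Cc x y * Vf n d A B Cc u x y)).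

Lemma dW_x n A B Cc y x : 0 < n -> y <> 0 -> is_derive (fun s => Wf n A B Cc s y) x (Wxf n A B Cc x y).
Proof. intros Hn Hy. unfold Wf, Wxf, Sf, Pf, Rqf, Iqf, Pxf, Iqxf. auto_derive; auto. field. split; lra. Qed.
Lemma dW_y n A B Cc x y : 0 < n -> y <> 0 -> is_derive (fun s => Wf n A B Cc x s) y (Wyf n A B Cc x y).
Proof. intros Hn Hy. unfold Wf, Wyf, Sf, Pf, Rqf, Iqf, Pxf, Iqxf. auto_derive.
  - repeat apply Rmult_integral_contrapositive_currified; lra.
  - field. split; lra. Qed.
Lemma NR_alt n d A B Cc x y u v : NR n d A B Cc x y u v =
  (Kf n v y * Ef n d A B Cc v x y * Uf n d A B Cc u x y, Kf n v y * Ef n d A B Cc v x y * Vf n d A B Cc u x y).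
Proof. reflexivity. Qed.

Lemma dE_x n d A B Cc v y x : 0 < n -> 0 < d -> y <> 0 ->
  is_derive (fun s => Ef n d A B Cc v s y) x (- 2 * PI * v / d * Wxf n A B Cc x y * Ef n d A B Cc v x y).
Proof. intros Hn Hd Hy. unfold Ef. auto_derive.
  - eexists; apply dW_x; auto.
  - replace (Derive (fun x0 : R => Wf n A B Cc x0 y) x) with (Wxf n A B Cc x y)
      by (symmetry; apply is_derive_unique; apply dW_x; auto). unfold Rdiv. ring. Qed.
Lemma dE_y n d A B Cc v x y : 0 < n -> 0 < d -> y <> 0 ->
  is_derive (fun s => Ef n d A B Cc v x s) y (- 2 * PI * v / d * Wyf n A B Cc x y * Ef n d A B Cc v x y).
Proof. intros Hn Hd Hy. unfold Ef. auto_derive.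
  - eexists; apply dW_y; auto.
  - replace (Derive (fun x0 : R => Wf n A B Cc x x0) y) with (Wyf n A B Cc x y)
      by (symmetry; apply is_derive_unique; apply dW_y; auto). unfold Rdiv. ring. Qed.

Lemma der_NRx n d A B Cc y u v x : 0 < n -> 0 < d -> y <> 0 ->
  cderiv (fun s => NR n d A B Cc s y u v) x (NRx' n d A B Cc x y u v).
Proof. intros Hn Hd Hy. split; (eapply is_derive_ext; [intros t; rewrite NR_alt; reflexivity|]); simpl;
  unfold NRx', Uf, Vf, Uxf, Vxf, Pxf, Iqxf, Rqf, Iqf; simpl; auto_derive;
  try (eexists; apply dE_x; auto);
  match goal with |- context [Derive ?f x] => replace (Derive f x) with
    (- 2 * PI * v / d * Wxf n A B Cc x y * Ef n d A B Cc v x y) by (symmetry; apply is_derive_unique; apply dE_x; auto) end;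
  unfold Rdiv; ring. Qed.

Lemma der_NRy n d A B Cc x u v y : 0 < n -> 0 < d -> 0 < y ->
  cderiv (fun s => NR n d A B Cc x s u v) y (NRy' n d A B Cc x y u v).
Proof. intros Hn Hd Hy. assert (Hy' : y <> 0) by lra. split; (eapply is_derive_ext; [intros t; rewrite NR_alt; reflexivity|]); simpl;
  unfold NRy', Kf, Kyf, Uf, Vf, Uyf, Vyf, Pxf, Iqxf, Rqf, Iqf; simpl; auto_derive;
  try (repeat match goal with |- ex_derive _ _ => eexists; apply dE_y; auto | |- _ /\ _ => split
     | |- _ <> 0 => repeat apply Rmult_integral_contrapositive_currified; lra | |- True => exact I end);
  match goal with |- context [Derive ?f y] => replace (Derive f y) with
    (- 2 * PI * v / d * Wyf n A B Cc x y * Ef n d A B Cc v x y) by (symmetry; apply is_derive_unique; apply dE_y; auto) end;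
  field; lra. Qed.

Ltac side_tac dEl :=
  repeat match goal with |- ex_derive _ _ => eexists; apply dEl; auto | |- _ /\ _ => split
     | |- _ <> 0 => repeat apply Rmult_integral_contrapositive_currified; lra | |- True => exact I end.

Lemma cont_NRx n d A B Cc y u v x : 0 < n -> 0 < d -> y <> 0 ->
  continuity_pt (fun s => Re (NRx' n d A B Cc s y u v)) x /\ continuity_pt (fun s => Im (NRx' n d A B Cc s y u v)) x.
Proof. intros Hn Hd Hy. split; apply cont_of_der; unfold NRx', Kf, Uf, Vf, Uxf, Vxf, Wxf, Pxf, Iqxf, Pf, Rqf, Iqf; simpl;
  auto_derive; side_tac dE_x. Qed.

Lemma cont_NRy n d A B Cc x u v y : 0 < n -> 0 < d -> 0 < y ->
  continuity_pt (fun s => Re (NRy' n d A B Cc x s u v)) y /\ continuity_pt (fun s => Im (NRy' n d A B Cc x s u v)) y.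
Proof. intros Hn Hd Hy. assert (y <> 0) by lra. split; apply cont_of_der; unfold NRy', Kf, Kyf, Uf, Vf, Uyf, Vyf, Wyf, Sf, Pxf, Iqxf, Pf, Rqf, Iqf; simpl;
  auto_derive; side_tac dE_y. Qed.

Section UBlib.
Variable I : Type.
Variable Dom : I -> Prop.
Variable T : I -> R.
Hypothesis HT : forall i, Dom i -> 1 <= T i.

Definition UB (m : nat) (f : I -> R) := exists K, 0 <= K /\ forall i, Dom i -> Rabs (f i) <= K * T i ^ m.

Lemma UB_ext m f g : (forall i, Dom i -> f i = g i) -> UB m g -> UB m f.
Proof. intros He [K [HK H]]. exists K; split; auto. intros i Di. rewrite He; auto. Qed.

Lemma UB_add m f g : UB m f -> UB m g -> UB m (fun i => f i + g i).
Proof. intros [K1 [H1 B1]] [K2 [H2 B2]]. exists (K1 + K2). split; [lra|]. intros i Di.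
  eapply Rle_trans; [apply Rabs_triang|]. specialize (B1 i Di). specialize (B2 i Di). lra. Qed.

Lemma UB_opp m f : UB m f -> UB m (fun i => - f i).
Proof. intros [K [H B]]. exists K; split; auto. intros i Di. rewrite Rabs_Ropp. auto. Qed.

Lemma UB_sub m f g : UB m f -> UB m g -> UB m (fun i => f i - g i).
Proof. intros H1 H2. apply (UB_add m f (fun i => - g i)); auto. apply UB_opp; auto. Qed.

Lemma UB_mul m1 m2 f g : UB m1 f -> UB m2 g -> UB (m1 + m2) (fun i => f i * g i).
Proof. intros [K1 [H1 B1]] [K2 [H2 B2]]. exists (K1 * K2). split; [nra|]. intros i Di.
  rewrite Rabs_mult, pow_add. specialize (B1 i Di). specialize (B2 i Di).
  replace (K1 * K2 * (T i ^ m1 * T i ^ m2)) with ((K1 * T i ^ m1) * (K2 * T i ^ m2)) by ring.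
  apply Rmult_le_compat; auto; apply Rabs_pos. Qed.

Lemma UB_mono m m' f : (m <= m')%nat -> UB m f -> UB m' f.
Proof. intros Hm [K [H B]]. exists K; split; auto. intros i Di. eapply Rle_trans; [apply B; auto|].
  apply Rmult_le_compat_l; auto. apply Rle_pow; auto. Qed.

Lemma UB_cst c f : (forall i, Dom i -> Rabs (f i) <= c) -> UB 0 f.
Proof. intros H. exists (Rmax c 0). split; [apply Rmax_r|]. intros i Di. simpl. rewrite Rmult_1_r.
  eapply Rle_trans; [apply H; auto| apply Rmax_l]. Qed.

Lemma UB_const c : UB 0 (fun _ => c).
Proof. apply (UB_cst (Rabs c)). intros; lra. Qed.

Lemma UB_T1 f c : 0 <= c -> (forall i, Dom i -> Rabs (f i) <= c * T i) -> UB 1 f.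
Proof. intros Hc H. exists c. split; auto. intros i Di. simpl. rewrite Rmult_1_r. auto. Qed.

Lemma UB_bound m f : UB m f -> exists K, 0 <= K /\ forall i, Dom i -> Rabs (f i) <= K * T i ^ m.
Proof. auto. Qed.
End UBlib.
Arguments UB {I}.

Lemma abs_le_sq (a : R) : Rabs a <= 1 + a ^ 2.
Proof. unfold Rabs. destruct (Rcase_abs a); nra. Qed.

Lemma Sf_nonneg n A B Cc x y : 0 <= Sf n A B Cc x y.
Proof. unfold Sf. nra. Qed.

Lemma P_bnd n A B Cc x y : Rabs (Pf n A B Cc x y) <= 1 + Sf n A B Cc x y.
Proof. pose proof (abs_le_sq (Pf n A B Cc x y)). unfold Sf. nra. Qed.
Lemma Rq_bnd n A B Cc x y : Rabs (Rqf n A B Cc x y) <= 1 + Sf n A B Cc x y.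
Proof. pose proof (abs_le_sq (Rqf n A B Cc x y)). unfold Sf. nra. Qed.
Lemma Iq_bnd n A B Cc x y : Rabs (Iqf n A B Cc x y) <= 1 + Sf n A B Cc x y.
Proof. pose proof (abs_le_sq (Iqf n A B Cc x y)). unfold Sf. nra. Qed.

Lemma Px_eq n A B Cc x y : y <> 0 -> Pxf n A B Cc x y = Iqf n A B Cc x y / y.
Proof. intros Hy. unfold Pxf, Iqf. field. auto. Qed.
Lemma Iqx_eq n A B Cc x y : 0 < n -> y <> 0 -> Iqxf n A B Cc x y = (Pf n A B Cc x y - Rqf n A B Cc x y) / y.
Proof. intros Hn Hy. unfold Iqxf, Pf, Rqf. field. auto. Qed.
Lemma Qv_eq n A B Cc x y : 0 < n -> y <> 0 ->
  Qv n A B Cc = (Pf n A B Cc x y ^ 2 - Rqf n A B Cc x y ^ 2 - Iqf n A B Cc x y ^ 2) / (4 * n * y ^ 2).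
Proof. intros Hn Hy. unfold Qv, Pf, Rqf, Iqf. field. split; lra. Qed.

Lemma Px_bnd n A B Cc x y : 0 < y -> Rabs (Pxf n A B Cc x y) <= (1 + Sf n A B Cc x y) / y.
Proof. intros Hy. rewrite Px_eq by lra. unfold Rdiv. rewrite Rabs_mult, Rabs_inv, (Rabs_pos_eq y) by lra.
  apply Rmult_le_compat_r; [left; apply Rinv_0_lt_compat; auto| apply Iq_bnd]. Qed.
Lemma Iqx_bnd n A B Cc x y : 0 < n -> 0 < y -> Rabs (Iqxf n A B Cc x y) <= 2 * (1 + Sf n A B Cc x y) / y.
Proof. intros Hn Hy. rewrite Iqx_eq by lra. unfold Rdiv. rewrite Rabs_mult, Rabs_inv, (Rabs_pos_eq y) by lra.
  apply Rmult_le_compat_r; [left; apply Rinv_0_lt_compat; auto|].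
  eapply Rle_trans; [apply Rabs_triang|]. rewrite Rabs_Ropp. pose proof (P_bnd n A B Cc x y). pose proof (Rq_bnd n A B Cc x y). lra. Qed.
Lemma Qv_bnd n A B Cc x y : 0 < n -> 0 < y -> Rabs (Qv n A B Cc) <= (1 + Sf n A B Cc x y) / (4 * n * y ^ 2).
Proof. intros Hn Hy. rewrite (Qv_eq n A B Cc x y) by lra. unfold Rdiv.
  assert (0 < 4 * n * y ^ 2) by (apply Rmult_lt_0_compat; [lra| apply pow_lt; auto]).
  rewrite Rabs_mult, (Rabs_pos_eq (/ _)) by (left; apply Rinv_0_lt_compat; auto).
  apply Rmult_le_compat_r; [left; apply Rinv_0_lt_compat; auto|]. unfold Sf.
  apply Rabs_le. split; nra. Qed.

Lemma S_lower n A B Cc x y X y1 y2 : 0 < n -> 0 < y1 -> y1 <= y <= y2 -> Rabs x <= X ->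
  let kC := / (2 * n ^ 2 * y1 ^ 4) in
  let kB := 8 * n ^ 2 * X ^ 2 * kC + 2 / y1 ^ 2 in
  let kA := 3 + 3 * n ^ 2 * (X ^ 2 + y2 ^ 2) ^ 2 * kC + 3 * X ^ 2 * kB in
  A ^ 2 + B ^ 2 + Cc ^ 2 <= (kA + kB + kC) * Sf n A B Cc x y.
Proof.
  intros Hn Hy1 Hy HX kC kB kA.
  set (p := Pf n A B Cc x y). set (r := Rqf n A B Cc x y). set (q := Iqf n A B Cc x y).
  set (S := Sf n A B Cc x y).
  assert (HS : S = p ^ 2 + r ^ 2 + q ^ 2) by reflexivity.
  assert (Hy0 : 0 < y) by lra.
  assert (Hx2 : x ^ 2 <= X ^ 2). { pose proof (Rabs_pos x). rewrite <- (pow2_abs x). apply pow_incr. lra. }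
  assert (Hyy : y ^ 2 <= y2 ^ 2) by (apply pow_incr; lra).
  assert (Hw : / y ^ 2 <= / y1 ^ 2). { apply Rinv_le_contravar; [apply pow_lt; auto| apply pow_incr; lra]. }
  assert (Hw0 : 0 < / y ^ 2) by (apply Rinv_0_lt_compat, pow_lt; auto).
  assert (EC : Cc = (p - r) / (2 * n * y ^ 2)) by (unfold p, r, Pf, Rqf; field; lra).
  assert (EB : B = 2 * Cc * n * x - q / y) by (unfold q, Iqf; field; lra).
  assert (EA : A = p - Cc * n * (x ^ 2 + y ^ 2) + B * x) by (unfold p, Pf; ring).
  assert (HC : Cc ^ 2 <= kC * S).
  { rewrite EC. unfold kC.
    replace (((p - r) / (2 * n * y ^ 2)) ^ 2) with ((p - r) ^ 2 / (4 * n ^ 2) * (/ y ^ 2) ^ 2) by (field; repeat split; lra).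
    replace (/ (2 * n ^ 2 * y1 ^ 4) * S) with (2 * S / (4 * n ^ 2) * (/ y1 ^ 2) ^ 2) by (field; repeat split; lra).
    apply Rmult_le_compat.
    - apply Rdiv_le_0_compat; [apply pow2_ge_0| nra].
    - nra.
    - unfold Rdiv; apply Rmult_le_compat_r; [left; apply Rinv_0_lt_compat; nra| rewrite HS; pose proof (pow2_ge_0 (p + r)); pose proof (pow2_ge_0 q); nra].
    - apply pow_incr; lra. }
  assert (Hsq2 : forall a b : R, (a - b) ^ 2 <= 2 * a ^ 2 + 2 * b ^ 2).
  { intros a b. pose proof (pow2_ge_0 (a + b)). nra. }
  assert (HB : B ^ 2 <= kB * S).
  { rewrite EB.
    assert (H1 : q ^ 2 * (/ y ^ 2) <= S * (/ y1 ^ 2)).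
    { apply Rmult_le_compat; try lra. apply pow2_ge_0. rewrite HS. pose proof (pow2_ge_0 p). pose proof (pow2_ge_0 r). lra. }
    assert (H2 : Cc ^ 2 * x ^ 2 <= kC * S * X ^ 2) by (apply Rmult_le_compat; try lra; apply pow2_ge_0).
    assert (h1 : (2 * Cc * n * x) ^ 2 <= 4 * n ^ 2 * (kC * S * X ^ 2)).
    { replace ((2 * Cc * n * x) ^ 2) with (4 * n ^ 2 * (Cc ^ 2 * x ^ 2)) by ring.
      apply Rmult_le_compat_l; [nra|auto]. }
    assert (h2 : (q / y) ^ 2 <= S * / y1 ^ 2) by (replace ((q / y) ^ 2) with (q ^ 2 * (/ y ^ 2)) by (field; lra); auto).
    assert (E : kB * S = 2 * (4 * n ^ 2 * (kC * S * X ^ 2)) + 2 * (S * / y1 ^ 2)) by (unfold kB; field; lra).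
    pose proof (Hsq2 (2 * Cc * n * x) (q / y)). lra. }
  assert (HA : A ^ 2 <= kA * S).
  { rewrite EA. unfold kA.
    assert (Hs : forall a b c : R, (a + b + c) ^ 2 <= 3 * (a ^ 2 + b ^ 2 + c ^ 2)).
    { intros a b c. pose proof (pow2_ge_0 (a-b)). pose proof (pow2_ge_0 (b-c)). pose proof (pow2_ge_0 (a-c)).
      assert (E : 3 * (a ^ 2 + b ^ 2 + c ^ 2) - (a + b + c) ^ 2 = (a - b) ^ 2 + (b - c) ^ 2 + (a - c) ^ 2) by ring. lra. }
    eapply Rle_trans; [apply (Hs p (- (Cc * n * (x ^ 2 + y ^ 2))) (B * x))|].
    assert (p ^ 2 <= S) by (rewrite HS; nra).
    assert ((- (Cc * n * (x ^ 2 + y ^ 2))) ^ 2 <= n ^ 2 * (X ^ 2 + y2 ^ 2) ^ 2 * (kC * S)).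
    { replace ((- (Cc * n * (x ^ 2 + y ^ 2))) ^ 2) with (n ^ 2 * (x ^ 2 + y ^ 2) ^ 2 * Cc ^ 2) by ring.
      apply Rmult_le_compat; try nra. apply Rmult_le_compat_l; [nra|]. apply pow_incr. nra. }
    assert ((B * x) ^ 2 <= X ^ 2 * (kB * S)).
    { replace ((B * x) ^ 2) with (x ^ 2 * B ^ 2) by ring. apply Rmult_le_compat; try nra. }
    nra. }
  nra.
Qed.

Definition Ix := (R * R * R * R)%type.
Definition iA (i : Ix) := fst (fst (fst i)).
Definition iB (i : Ix) := snd (fst (fst i)).
Definition iC (i : Ix) := snd (fst i).
Definition iS (i : Ix) := snd i.

Section Fam.
Variables (n y1 : R) (xi yi : Ix -> R) (Dom : Ix -> Prop).
Hypothesis Hn : 0 < n.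
Hypothesis Hy1 : 0 < y1.
Hypothesis Hyy : forall i, Dom i -> y1 <= yi i.

Definition Tt i := 1 + Sf n (iA i) (iB i) (iC i) (xi i) (yi i).
Lemma Tt_ge1 i : 1 <= Tt i.
Proof. unfold Tt. pose proof (Sf_nonneg n (iA i) (iB i) (iC i) (xi i) (yi i)). lra. Qed.

Definition UBx (f : Ix -> R) := exists m K, 0 <= K /\ forall i, Dom i -> Rabs (f i) <= K * Tt i ^ m.

Lemma UBx_ext f g : (forall i, Dom i -> f i = g i) -> UBx g -> UBx f.
Proof. intros He [m [K [HK B]]]. exists m, K. split; auto. intros i Di. rewrite He; auto. Qed.

Lemma UBx_raise f m K m' : (m <= m')%nat -> 0 <= K -> (forall i, Dom i -> Rabs (f i) <= K * Tt i ^ m) ->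
  forall i, Dom i -> Rabs (f i) <= K * Tt i ^ m'.
Proof. intros Hm HK H i Di. eapply Rle_trans; [apply H; auto|]. apply Rmult_le_compat_l; auto.
  apply Rle_pow; auto. apply Tt_ge1. Qed.

Lemma UBx_add f g : UBx f -> UBx g -> UBx (fun i => f i + g i).
Proof. intros [m1 [K1 [H1 B1]]] [m2 [K2 [H2 B2]]]. exists (Nat.max m1 m2), (K1 + K2). split; [lra|].
  intros i Di. eapply Rle_trans; [apply Rabs_triang|].
  pose proof (UBx_raise f m1 K1 (Nat.max m1 m2) (Nat.le_max_l _ _) H1 B1 i Di).
  pose proof (UBx_raise g m2 K2 (Nat.max m1 m2) (Nat.le_max_r _ _) H2 B2 i Di). lra. Qed.
Lemma UBx_opp f : UBx f -> UBx (fun i => - f i).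
Proof. intros [m [K [H B]]]. exists m, K. split; auto. intros i Di. rewrite Rabs_Ropp; auto. Qed.
Lemma UBx_sub f g : UBx f -> UBx g -> UBx (fun i => f i - g i).
Proof. intros. apply (UBx_add f (fun i => - g i)); auto. apply UBx_opp; auto. Qed.
Lemma UBx_mul f g : UBx f -> UBx g -> UBx (fun i => f i * g i).
Proof. intros [m1 [K1 [H1 B1]]] [m2 [K2 [H2 B2]]]. exists (m1 + m2)%nat, (K1 * K2). split; [nra|].
  intros i Di. rewrite Rabs_mult, pow_add. specialize (B1 i Di). specialize (B2 i Di).
  replace (K1 * K2 * (Tt i ^ m1 * Tt i ^ m2)) with ((K1 * Tt i ^ m1) * (K2 * Tt i ^ m2)) by ring.
  apply Rmult_le_compat; auto; apply Rabs_pos. Qed.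
Lemma UBx_cst (c : R) f : (forall i, Dom i -> Rabs (f i) <= c) -> UBx f.
Proof. intros H. exists 0%nat, (Rmax c 0). split; [apply Rmax_r|]. intros i Di. simpl. rewrite Rmult_1_r.
  eapply Rle_trans; [apply H; auto| apply Rmax_l]. Qed.
Lemma UBx_T1 (c : R) f : 0 <= c -> (forall i, Dom i -> Rabs (f i) <= c * Tt i) -> UBx f.
Proof. intros Hc H. exists 1%nat, c. split; auto. intros i Di. simpl. rewrite Rmult_1_r. auto. Qed.
Lemma UBx_const (c : R) : UBx (fun _ => c).
Proof. apply (UBx_cst (Rabs c)). intros; lra. Qed.
Lemma UBx_cos f : UBx (fun i => cos (f i)).
Proof. apply (UBx_cst 1). intros; apply Rabs_le; pose proof (COS_bound (f i)); lra. Qed.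
Lemma UBx_sin f : UBx (fun i => sin (f i)).
Proof. apply (UBx_cst 1). intros; apply Rabs_le; pose proof (SIN_bound (f i)); lra. Qed.

Lemma UBx_P : UBx (fun i => Pf n (iA i) (iB i) (iC i) (xi i) (yi i)).
Proof. apply (UBx_T1 1); [lra|]. intros i Di. rewrite Rmult_1_l. apply P_bnd. Qed.
Lemma UBx_Rq : UBx (fun i => Rqf n (iA i) (iB i) (iC i) (xi i) (yi i)).
Proof. apply (UBx_T1 1); [lra|]. intros i Di. rewrite Rmult_1_l. apply Rq_bnd. Qed.
Lemma UBx_Iq : UBx (fun i => Iqf n (iA i) (iB i) (iC i) (xi i) (yi i)).
Proof. apply (UBx_T1 1); [lra|]. intros i Di. rewrite Rmult_1_l. apply Iq_bnd. Qed.
Lemma UBx_S : UBx (fun i => Sf n (iA i) (iB i) (iC i) (xi i) (yi i)).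
Proof. apply (UBx_T1 1); [lra|]. intros i Di. rewrite Rmult_1_l. unfold Tt.
  pose proof (Sf_nonneg n (iA i) (iB i) (iC i) (xi i) (yi i)). rewrite Rabs_pos_eq; lra. Qed.
Lemma UBx_Px : UBx (fun i => Pxf n (iA i) (iB i) (iC i) (xi i) (yi i)).
Proof. apply (UBx_T1 (/ y1)); [left; apply Rinv_0_lt_compat; auto|]. intros i Di.
  pose proof (Hyy i Di). eapply Rle_trans; [apply Px_bnd; lra|]. unfold Rdiv, Tt. rewrite Rmult_comm.
  apply Rmult_le_compat_r; [pose proof (Sf_nonneg n (iA i) (iB i) (iC i) (xi i) (yi i)); lra|].
  apply Rinv_le_contravar; lra. Qed.
Lemma UBx_Iqx : UBx (fun i => Iqxf n (iA i) (iB i) (iC i) (xi i) (yi i)).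
Proof. apply (UBx_T1 (2 / y1)); [left; apply Rdiv_lt_0_compat; lra|]. intros i Di.
  pose proof (Hyy i Di). eapply Rle_trans; [apply Iqx_bnd; lra|]. unfold Rdiv, Tt.
  pose proof (Sf_nonneg n (iA i) (iB i) (iC i) (xi i) (yi i)).
  assert (/ yi i <= / y1) by (apply Rinv_le_contravar; lra).
  assert (0 < / yi i) by (apply Rinv_0_lt_compat; lra). nra. Qed.
Lemma UBx_Qv : UBx (fun i => Qv n (iA i) (iB i) (iC i)).
Proof. apply (UBx_T1 (/ (4 * n * y1 ^ 2))); [left; apply Rinv_0_lt_compat; apply Rmult_lt_0_compat; [lra|apply pow_lt; lra]|].
  intros i Di. pose proof (Hyy i Di). eapply Rle_trans; [apply (Qv_bnd n _ _ _ (xi i) (yi i)); lra|].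
  unfold Rdiv, Tt. rewrite Rmult_comm. apply Rmult_le_compat_r; [pose proof (Sf_nonneg n (iA i) (iB i) (iC i) (xi i) (yi i)); lra|].
  apply Rinv_le_contravar. apply Rmult_lt_0_compat; [lra|apply pow_lt; lra].
  apply Rmult_le_compat_l; [lra|]. apply pow_incr; lra. Qed.
Lemma UBx_invy k : UBx (fun i => / (yi i ^ k)).
Proof. apply (UBx_cst (/ (y1 ^ k))). intros i Di. pose proof (Hyy i Di).
  rewrite Rabs_pos_eq by (left; apply Rinv_0_lt_compat, pow_lt; lra).
  apply Rinv_le_contravar; [apply pow_lt; lra| apply pow_incr; lra]. Qed.

Lemma UBx_gauss G (E : Ix -> R) (alpha : R) : UBx G ->
  (forall i, Dom i -> 0 <= E i <= exp (- alpha * Sf n (iA i) (iB i) (iC i) (xi i) (yi i))) ->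
  exists m K, 0 <= K /\ forall i, Dom i ->
    Rabs (G i * E i) <= K * (1 + Sf n (iA i) (iB i) (iC i) (xi i) (yi i)) ^ m *
       exp (- alpha * Sf n (iA i) (iB i) (iC i) (xi i) (yi i)).
Proof. intros [m [K [HK B]]] HE. exists m, K. split; auto. intros i Di. rewrite Rabs_mult.
  specialize (HE i Di). rewrite (Rabs_pos_eq (E i)) by lra. apply Rmult_le_compat; try lra; try apply Rabs_pos.
  apply B; auto. Qed.
End Fam.

Ltac ubx_atom :=
  first [ assumption | apply UBx_P; solve [auto] | apply UBx_Rq; solve [auto] | apply UBx_Iq; solve [auto] | apply UBx_S; solve [auto]
        | apply UBx_Px; solve [auto] | apply UBx_Iqx; solve [auto] | apply UBx_Qv; solve [auto]
        | apply UBx_invy; solve [auto] | apply UBx_cos | apply UBx_sin | apply UBx_const ].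
Ltac ubx :=
  first [ ubx_atom
        | apply UBx_add; ubx | apply UBx_sub; ubx | apply UBx_opp; ubx | apply UBx_mul; ubx ].

Lemma summ_add M1 M2 : summ M1 -> summ M2 -> summ (fun k1 k2 k3 => M1 k1 k2 k3 + M2 k1 k2 k3).
Proof. intros [H1 [B1 HB1]] [H2 [B2 HB2]]. split.
  - intros; specialize (H1 k1 k2 k3); specialize (H2 k1 k2 k3); lra.
  - exists (B1 + B2). intros n0. rewrite (rbox_ext _ (fun k1 k2 k3 => 1 * M1 k1 k2 k3 + 1 * M2 k1 k2 k3)) by (intros; ring).
    rewrite rbox_lin. specialize (HB1 n0); specialize (HB2 n0). lra. Qed.

Lemma family_M (N D a b c : Z) (xs ys : R -> R) (DomS : R -> Prop) (X y1 y2 alpha : R) (F : Ix -> R) :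
  (1 <= N)%Z -> D <> 0%Z -> 0 < y1 -> 0 < alpha ->
  (forall s, DomS s -> Rabs (xs s) <= X /\ y1 <= ys s <= y2) ->
  (exists m K, 0 <= K /\ forall i, DomS (iS i) ->
      Rabs (F i) <= K * (1 + Sf (IZR N) (iA i) (iB i) (iC i) (xs (iS i)) (ys (iS i))) ^ m *
        exp (- alpha * Sf (IZR N) (iA i) (iB i) (iC i) (xs (iS i)) (ys (iS i)))) ->
  exists M, summ M /\ forall k1 k2 k3 s, DomS s ->
    Rabs (F (IZR (a + D * k1), IZR (b + 2 * N * D * k2), IZR (c + D * k3), s)) <= M k1 k2 k3.
Proof.
  intros HN HD Hy1 Ha Hxy [m [K [HK HF]]].
  assert (Hn : 0 < IZR N) by (apply (IZR_lt 0); lia).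
  set (kC := / (2 * IZR N ^ 2 * y1 ^ 4)).
  set (kB := 8 * IZR N ^ 2 * X ^ 2 * kC + 2 / y1 ^ 2).
  set (kA := 3 + 3 * IZR N ^ 2 * (X ^ 2 + y2 ^ 2) ^ 2 * kC + 3 * X ^ 2 * kB).
  assert (HkC : 0 < kC) by (unfold kC; apply Rinv_0_lt_compat; apply Rmult_lt_0_compat; [apply Rmult_lt_0_compat; [lra|apply pow_lt; lra]| apply pow_lt; lra]).
  assert (HkB : 0 <= kB). { unfold kB. assert (0 <= 8 * IZR N ^ 2 * X ^ 2) by (apply Rmult_le_pos; [apply Rmult_le_pos; [lra|apply pow2_ge_0]|apply pow2_ge_0]).
    assert (0 < 2 / y1 ^ 2) by (apply Rdiv_lt_0_compat; [lra|apply pow_lt; lra]).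
    assert (0 <= 8 * IZR N ^ 2 * X ^ 2 * kC) by (apply Rmult_le_pos; lra). lra. }
  assert (HkA : 0 <= kA). { unfold kA. assert (0 <= 3 * IZR N ^ 2 * (X ^ 2 + y2 ^ 2) ^ 2) by (apply Rmult_le_pos; [apply Rmult_le_pos; [lra|apply pow2_ge_0]|apply pow2_ge_0]).
    assert (0 <= 3 * X ^ 2) by (apply Rmult_le_pos; [lra|apply pow2_ge_0]).
    assert (0 <= 3 * IZR N ^ 2 * (X ^ 2 + y2 ^ 2) ^ 2 * kC) by (apply Rmult_le_pos; lra).
    assert (0 <= 3 * X ^ 2 * kB) by (apply Rmult_le_pos; lra). lra. }
  set (eps := / (kA + kB + kC)).
  assert (Heps : 0 < eps) by (unfold eps; apply Rinv_0_lt_compat; lra).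
  destruct (dominate a b c D N eps alpha K m HD HN Heps Ha HK) as [M [HM HMb]].
  exists M. split; auto. intros k1 k2 k3 s Ds.
  specialize (HF (IZR (a + D * k1), IZR (b + 2 * N * D * k2), IZR (c + D * k3), s) Ds).
  unfold iA, iB, iC, iS in HF; cbn [fst snd] in HF.
  eapply Rle_trans; [exact HF|]. apply HMb. apply Sf_nonneg.
  destruct (Hxy s Ds) as [Hx Hy].
  pose proof (S_lower (IZR N) (IZR (a + D * k1)) (IZR (b + 2 * N * D * k2)) (IZR (c + D * k3)) (xs s) (ys s) X y1 y2 Hn Hy1 Hy Hx) as HS.
  cbv zeta in HS. fold kC kB kA in HS.
  unfold eps. apply Rmult_le_reg_l with (kA + kB + kC); [lra|]. rewrite <- Rmult_assoc, Rinv_r by lra. lra.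
Qed.

Lemma bound_of n y1 (xs ys : R -> R) (DomS : R -> Prop) alpha (F G E : Ix -> R) :
  0 < n -> 0 < y1 -> (forall s, DomS s -> y1 <= ys s) ->
  (forall i, DomS (iS i) -> F i = G i * E i) ->
  (forall i, DomS (iS i) -> 0 <= E i <= exp (- alpha * Sf n (iA i) (iB i) (iC i) (xs (iS i)) (ys (iS i)))) ->
  UBx n (fun i => xs (iS i)) (fun i => ys (iS i)) (fun i => DomS (iS i)) G ->
  exists m K, 0 <= K /\ forall i, DomS (iS i) ->
    Rabs (F i) <= K * (1 + Sf n (iA i) (iB i) (iC i) (xs (iS i)) (ys (iS i))) ^ m *
        exp (- alpha * Sf n (iA i) (iB i) (iC i) (xs (iS i)) (ys (iS i))).
Proof. intros Hn Hy1 Hy HFe HE HG.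
  destruct (UBx_gauss n (fun i => xs (iS i)) (fun i => ys (iS i)) (fun i => DomS (iS i)) G E alpha HG HE) as [m [K [HK B]]].
  exists m, K. split; auto. intros i Di. rewrite HFe by auto. apply B; auto. Qed.

Lemma E_bnd n d A B Cc x y v vmin ymax : 0 < n -> 0 < d -> 0 < vmin -> vmin <= v -> 0 < y <= ymax ->
  0 <= exp (- 2 * PI * v * Wf n A B Cc x y / d) <=
  exp (- (2 * PI * vmin / (4 * n * ymax ^ 2 * d)) * Sf n A B Cc x y).
Proof. intros Hn Hd Hv Hvv Hy. split; [left; apply exp_pos|]. apply exp_mono.
  pose proof (Sf_nonneg n A B Cc x y). pose proof PI_RGT_0. unfold Wf.
  set (S := Sf n A B Cc x y) in *.
  assert (y ^ 2 <= ymax ^ 2) by (apply pow_incr; lra).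
  assert (0 < y ^ 2) by (apply pow_lt; lra).
  assert (vmin / (4 * n * ymax ^ 2 * d) <= v / (4 * n * y ^ 2 * d)).
  { unfold Rdiv. apply Rmult_le_compat; try lra. left; apply Rinv_0_lt_compat.
    apply Rmult_lt_0_compat; [|lra]. apply Rmult_lt_0_compat; [lra|]. lra.
    apply Rinv_le_contravar. apply Rmult_lt_0_compat; [|lra]. apply Rmult_lt_0_compat; [lra|]. lra.
    apply Rmult_le_compat_r; [lra|]. apply Rmult_le_compat_l; lra. }
  replace (- 2 * PI * v * (S / (4 * n * y ^ 2)) / d) with (- (2 * PI) * (v / (4 * n * y ^ 2 * d)) * S) by (field; repeat split; lra).
  replace (- (2 * PI * vmin / (4 * n * ymax ^ 2 * d)) * S) with (- (2 * PI) * (vmin / (4 * n * ymax ^ 2 * d)) * S) by (field; repeat split; try lra; nra).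
  assert (0 <= (v / (4 * n * y ^ 2 * d) - vmin / (4 * n * ymax ^ 2 * d)) * S) by (apply Rmult_le_pos; lra).
  assert (0 <= 2 * PI * ((v / (4 * n * y ^ 2 * d) - vmin / (4 * n * ymax ^ 2 * d)) * S)) by (apply Rmult_le_pos; lra).
  lra.
Qed.


Lemma four (DomS : R -> Prop) (F1 F2 F3 F4 : Z -> Z -> Z -> R -> R) :
  (exists M, summ M /\ forall k1 k2 k3 s, DomS s -> Rabs (F1 k1 k2 k3 s) <= M k1 k2 k3) ->
  (exists M, summ M /\ forall k1 k2 k3 s, DomS s -> Rabs (F2 k1 k2 k3 s) <= M k1 k2 k3) ->
  (exists M, summ M /\ forall k1 k2 k3 s, DomS s -> Rabs (F3 k1 k2 k3 s) <= M k1 k2 k3) ->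
  (exists M, summ M /\ forall k1 k2 k3 s, DomS s -> Rabs (F4 k1 k2 k3 s) <= M k1 k2 k3) ->
  exists M, summ M /\ forall k1 k2 k3 s, DomS s ->
    Rabs (F1 k1 k2 k3 s) <= M k1 k2 k3 /\ Rabs (F2 k1 k2 k3 s) <= M k1 k2 k3 /\
    Rabs (F3 k1 k2 k3 s) <= M k1 k2 k3 /\ Rabs (F4 k1 k2 k3 s) <= M k1 k2 k3.
Proof.
  intros [M1 [S1 B1]] [M2 [S2 B2]] [M3 [S3 B3]] [M4 [S4 B4]].
  exists (fun k1 k2 k3 => M1 k1 k2 k3 + M2 k1 k2 k3 + (M3 k1 k2 k3 + M4 k1 k2 k3)).
  split. { apply (summ_add (fun k1 k2 k3 => M1 k1 k2 k3 + M2 k1 k2 k3)); apply summ_add; auto. }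
  intros k1 k2 k3 s Ds. destruct S1 as [P1 _], S2 as [P2 _], S3 as [P3 _], S4 as [P4 _].
  specialize (P1 k1 k2 k3); specialize (P2 k1 k2 k3); specialize (P3 k1 k2 k3); specialize (P4 k1 k2 k3).
  specialize (B1 k1 k2 k3 s Ds); specialize (B2 k1 k2 k3 s Ds); specialize (B3 k1 k2 k3 s Ds); specialize (B4 k1 k2 k3 s Ds).
  repeat split; lra.
Qed.

Ltac famM N D a b c xs ys DomS X y1 y2 al F :=
  let H := fresh in
  pose proof (family_M N D a b c xs ys DomS X y1 y2 al F) as H;
  unfold iA, iB, iC, iS in H; cbn [fst snd] in H; apply H; clear H.

Section LU.
Variables (N D a b c : Z) (x0 y0 v0 : R).
Hypotheses (HN : (1 <= N)%Z) (HD : D <> 0%Z) (Hy0 : 0 < y0) (Hv0 : 0 < v0).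
Let n := IZR N.
Let d := IZR (Z.abs D).
Lemma Hn : 0 < n. Proof. apply (IZR_lt 0); lia. Qed.
Lemma Hd : 0 < d. Proof. apply (IZR_lt 0); lia. Qed.
Let xs := fun _ : R => x0.
Let ys := fun _ : R => y0.
Let al := 2 * PI * v0 / (4 * n * y0 ^ 2 * d).
Lemma Hal : 0 < al.
Proof. pose proof Hn; pose proof Hd; pose proof PI_RGT_0. unfold al. apply Rdiv_lt_0_compat; [nra|].
  apply Rmult_lt_0_compat; [|lra]. apply Rmult_lt_0_compat; [lra|apply pow_lt; lra]. Qed.

Ltac fb G := apply (bound_of n y0 xs ys (fun _ => True) al _ G
     (fun i => exp (- 2 * PI * v0 * Wf n (iA i) (iB i) (iC i) x0 y0 / d))); auto; try (intros; unfold ys; lra);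
     [ intros i _; unfold iA, iB, iC, iS; simpl; ring
     | intros i _; unfold al, xs, ys; apply (E_bnd n d _ _ _ x0 y0 v0 v0 y0); auto; lra
     | let HY := fresh in assert (HY : forall i : Ix, True -> y0 <= ys (iS i)) by (intros; unfold ys; lra);
       pose proof (UBx_Qv n y0 (fun i => xs (iS i)) (fun i => ys (iS i)) (fun _ => True) Hn Hy0 HY);
       unfold pv, th, Rdiv; ubx ].

Lemma LU_M : exists M, summ M /\ forall k1 k2 k3 s, True ->
  let A := IZR (a + D * k1) in let B := IZR (b + 2 * N * D * k2) in let C := IZR (c + D * k3) in
    Rabs (Re (NL n d A B C x0 y0 s v0)) <= M k1 k2 k3 /\ Rabs (Im (NL n d A B C x0 y0 s v0)) <= M k1 k2 k3 /\
    Rabs (Re (NLu' n d A B C x0 y0 s v0)) <= M k1 k2 k3 /\ Rabs (Im (NLu' n d A B C x0 y0 s v0)) <= M k1 k2 k3.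
Proof.
  pose proof Hn; pose proof Hd; pose proof Hal.
  apply four.
  - famM N D a b c xs ys (fun _ : R => True) (Rabs x0) y0 y0 al (fun i => Re (NL n d (iA i) (iB i) (iC i) x0 y0 (iS i) v0)); auto.
    intros; unfold xs, ys; lra.
    fb (fun i => v0 * pv n (iA i) (iB i) (iC i) x0 y0 * cos (th n d (iA i) (iB i) (iC i) * iS i)).
  - famM N D a b c xs ys (fun _ : R => True) (Rabs x0) y0 y0 al (fun i => Im (NL n d (iA i) (iB i) (iC i) x0 y0 (iS i) v0)); auto.
    intros; unfold xs, ys; lra.
    fb (fun i => v0 * pv n (iA i) (iB i) (iC i) x0 y0 * sin (th n d (iA i) (iB i) (iC i) * iS i)).
  - famM N D a b c xs ys (fun _ : R => True) (Rabs x0) y0 y0 al (fun i => Re (NLu' n d (iA i) (iB i) (iC i) x0 y0 (iS i) v0)); auto.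
    intros; unfold xs, ys; lra.
    fb (fun i => - (v0 * pv n (iA i) (iB i) (iC i) x0 y0 * th n d (iA i) (iB i) (iC i) * sin (th n d (iA i) (iB i) (iC i) * iS i))).
  - famM N D a b c xs ys (fun _ : R => True) (Rabs x0) y0 y0 al (fun i => Im (NLu' n d (iA i) (iB i) (iC i) x0 y0 (iS i) v0)); auto.
    intros; unfold xs, ys; lra.
    fb (fun i => v0 * pv n (iA i) (iB i) (iC i) x0 y0 * th n d (iA i) (iB i) (iC i) * cos (th n d (iA i) (iB i) (iC i) * iS i)).
Qed.
End LU.

Lemma inv_atom n y1 xi yi (Dom : Ix -> Prop) c k : 0 < c -> 0 < y1 -> (forall i, Dom i -> y1 <= yi i) ->
  UBx n xi yi Dom (fun i => / (c * yi i ^ k)).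
Proof. intros Hc Hy1 Hyy. apply (UBx_cst _ _ _ _ (/ (c * y1 ^ k))). intros i Di. pose proof (Hyy i Di).
  assert (0 < y1 ^ k) by (apply pow_lt; lra).
  rewrite Rabs_pos_eq by (left; apply Rinv_0_lt_compat, Rmult_lt_0_compat; [lra| apply pow_lt; lra]).
  apply Rinv_le_contravar; [apply Rmult_lt_0_compat; lra|]. apply Rmult_le_compat_l; [lra|]. apply pow_incr; lra. Qed.

Section LV.
Variables (N D a b c : Z) (x0 y0 u0 v0 : R).
Hypotheses (HN : (1 <= N)%Z) (HD : D <> 0%Z) (Hy0 : 0 < y0) (Hv0 : 0 < v0).
Let n := IZR N.
Let d := IZR (Z.abs D).
Let xs := fun _ : R => x0.
Let ys := fun _ : R => y0.
Let DomS := fun s => v0 - v0 / 2 < s < v0 + v0 / 2.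
Let al := 2 * PI * (v0 / 2) / (4 * n * y0 ^ 2 * d).

Ltac fb G := apply (bound_of n y0 xs ys DomS al _ G
     (fun i => exp (- 2 * PI * iS i * Wf n (iA i) (iB i) (iC i) x0 y0 / d))); auto; try (intros; unfold ys; lra);
     [ intros i _; unfold iA, iB, iC, iS; simpl; ring
     | intros i Di; unfold al, xs, ys; unfold DomS in Di; apply (E_bnd n d _ _ _ x0 y0 (iS i) (v0 / 2) y0); auto; lra
     | let HY := fresh in assert (HY : forall i : Ix, DomS (iS i) -> y0 <= ys (iS i)) by (intros; unfold ys; lra);
       pose proof (UBx_Qv n y0 (fun i => xs (iS i)) (fun i => ys (iS i)) (fun i => DomS (iS i)) ltac:(unfold n; apply (IZR_lt 0); lia) Hy0 HY);
       let HS := fresh in assert (HS : UBx n (fun i => xs (iS i)) (fun i => ys (iS i)) (fun i => DomS (iS i)) (fun i => iS i))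
         by (apply (UBx_cst _ _ _ _ (v0 + v0 / 2)); intros i Di; unfold DomS in Di; apply Rabs_le; lra);
       unfold pv, th, Wf, Rdiv; ubx ].

Lemma LV_M : exists M, summ M /\ forall k1 k2 k3 s, DomS s ->
  let A := IZR (a + D * k1) in let B := IZR (b + 2 * N * D * k2) in let C := IZR (c + D * k3) in
    Rabs (Re (NL n d A B C x0 y0 u0 s)) <= M k1 k2 k3 /\ Rabs (Im (NL n d A B C x0 y0 u0 s)) <= M k1 k2 k3 /\
    Rabs (Re (NLv' n d A B C x0 y0 u0 s)) <= M k1 k2 k3 /\ Rabs (Im (NLv' n d A B C x0 y0 u0 s)) <= M k1 k2 k3.
Proof.
  assert (Hn' : 0 < n) by (apply (IZR_lt 0); lia). assert (Hd' : 0 < d) by (apply (IZR_lt 0); lia).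
  assert (0 < al). { pose proof PI_RGT_0. unfold al. apply Rdiv_lt_0_compat; [nra|].
    apply Rmult_lt_0_compat; [|lra]. apply Rmult_lt_0_compat; [lra|apply pow_lt; lra]. }
  apply four.
  - famM N D a b c xs ys DomS (Rabs x0) y0 y0 al (fun i => Re (NL n d (iA i) (iB i) (iC i) x0 y0 u0 (iS i))); auto.
    intros; unfold xs, ys; lra.
    fb (fun i => iS i * pv n (iA i) (iB i) (iC i) x0 y0 * cos (th n d (iA i) (iB i) (iC i) * u0)).
  - famM N D a b c xs ys DomS (Rabs x0) y0 y0 al (fun i => Im (NL n d (iA i) (iB i) (iC i) x0 y0 u0 (iS i))); auto.
    intros; unfold xs, ys; lra.
    fb (fun i => iS i * pv n (iA i) (iB i) (iC i) x0 y0 * sin (th n d (iA i) (iB i) (iC i) * u0)).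
  - famM N D a b c xs ys DomS (Rabs x0) y0 y0 al (fun i => Re (NLv' n d (iA i) (iB i) (iC i) x0 y0 u0 (iS i))); auto.
    intros; unfold xs, ys; lra.
    fb (fun i => pv n (iA i) (iB i) (iC i) x0 y0 * (1 - 2 * PI * iS i * Wf n (iA i) (iB i) (iC i) x0 y0 / d) * cos (th n d (iA i) (iB i) (iC i) * u0)).
  - famM N D a b c xs ys DomS (Rabs x0) y0 y0 al (fun i => Im (NLv' n d (iA i) (iB i) (iC i) x0 y0 u0 (iS i))); auto.
    intros; unfold xs, ys; lra.
    fb (fun i => pv n (iA i) (iB i) (iC i) x0 y0 * (1 - 2 * PI * iS i * Wf n (iA i) (iB i) (iC i) x0 y0 / d) * sin (th n d (iA i) (iB i) (iC i) * u0)).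
Qed.
End LV.

Section RX.
Variables (N D a b c : Z) (x0 y0 u0 v0 : R).
Hypotheses (HN : (1 <= N)%Z) (HD : D <> 0%Z) (Hy0 : 0 < y0) (Hv0 : 0 < v0).
Let n := IZR N.
Let d := IZR (Z.abs D).
Let xs := fun s : R => s.
Let ys := fun _ : R => y0.
Let DomS := fun s => x0 - 1 < s < x0 + 1.
Let al := 2 * PI * v0 / (4 * n * y0 ^ 2 * d).

Ltac fb G := apply (bound_of n y0 xs ys DomS al _ G
     (fun i => Ef n d (iA i) (iB i) (iC i) v0 (iS i) y0)); auto; try (intros; unfold ys; lra);
     [ intros i _; unfold iA, iB, iC, iS; simpl; unfold Ef; ring
     | intros i Di; unfold al, xs, ys, Ef; apply (E_bnd n d _ _ _ (iS i) y0 v0 v0 y0); auto; lra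
     | let HY := fresh in assert (HY : forall i : Ix, DomS (iS i) -> y0 <= ys (iS i)) by (intros; unfold ys; lra);
       pose proof (UBx_Qv n y0 (fun i => xs (iS i)) (fun i => ys (iS i)) (fun i => DomS (iS i)) ltac:(unfold n; apply (IZR_lt 0); lia) Hy0 HY);
       pose proof (UBx_Px n y0 (fun i => xs (iS i)) (fun i => ys (iS i)) (fun i => DomS (iS i)) Hy0 HY);
       pose proof (UBx_Iqx n y0 (fun i => xs (iS i)) (fun i => ys (iS i)) (fun i => DomS (iS i)) ltac:(unfold n; apply (IZR_lt 0); lia) Hy0 HY);
       unfold Kf, Uf, Vf, Uxf, Vxf, Wxf, th, Rdiv; ubx ].

Lemma RX_M : exists M, summ M /\ forall k1 k2 k3 s, DomS s ->
  let A := IZR (a + D * k1) in let B := IZR (b + 2 * N * D * k2) in let C := IZR (c + D * k3) in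
    Rabs (Re (NR n d A B C s y0 u0 v0)) <= M k1 k2 k3 /\ Rabs (Im (NR n d A B C s y0 u0 v0)) <= M k1 k2 k3 /\
    Rabs (Re (NRx' n d A B C s y0 u0 v0)) <= M k1 k2 k3 /\ Rabs (Im (NRx' n d A B C s y0 u0 v0)) <= M k1 k2 k3.
Proof.
  assert (Hn' : 0 < n) by (apply (IZR_lt 0); lia). assert (Hd' : 0 < d) by (apply (IZR_lt 0); lia).
  assert (0 < al). { pose proof PI_RGT_0. unfold al. apply Rdiv_lt_0_compat; [nra|].
    apply Rmult_lt_0_compat; [|lra]. apply Rmult_lt_0_compat; [lra|apply pow_lt; lra]. }
  assert (HX : forall s, DomS s -> Rabs (xs s) <= Rabs x0 + 1 /\ y0 <= ys s <= y0).
  { intros s Ds. unfold DomS, xs, ys in *. split; [|lra]. unfold Rabs at 1 2; destruct (Rcase_abs s); destruct (Rcase_abs x0); lra. }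
  apply four.
  - famM N D a b c xs ys DomS (Rabs x0 + 1) y0 y0 al (fun i => Re (NR n d (iA i) (iB i) (iC i) (iS i) y0 u0 v0)); auto.
    fb (fun i => - sqrt v0 / (4 * n * y0 ^ 2) * (Rqf n (iA i) (iB i) (iC i) (iS i) y0 * cos (th n d (iA i) (iB i) (iC i) * u0)
       + Iqf n (iA i) (iB i) (iC i) (iS i) y0 * sin (th n d (iA i) (iB i) (iC i) * u0))).
  - famM N D a b c xs ys DomS (Rabs x0 + 1) y0 y0 al (fun i => Im (NR n d (iA i) (iB i) (iC i) (iS i) y0 u0 v0)); auto.
    fb (fun i => - sqrt v0 / (4 * n * y0 ^ 2) * (Iqf n (iA i) (iB i) (iC i) (iS i) y0 * cos (th n d (iA i) (iB i) (iC i) * u0)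
       - Rqf n (iA i) (iB i) (iC i) (iS i) y0 * sin (th n d (iA i) (iB i) (iC i) * u0))).
  - famM N D a b c xs ys DomS (Rabs x0 + 1) y0 y0 al (fun i => Re (NRx' n d (iA i) (iB i) (iC i) (iS i) y0 u0 v0)); auto.
    fb (fun i => Kf n v0 y0 * (Uxf n d (iA i) (iB i) (iC i) u0 (iS i) y0 - 2 * PI * v0 / d * Wxf n (iA i) (iB i) (iC i) (iS i) y0 * Uf n d (iA i) (iB i) (iC i) u0 (iS i) y0)).
  - famM N D a b c xs ys DomS (Rabs x0 + 1) y0 y0 al (fun i => Im (NRx' n d (iA i) (iB i) (iC i) (iS i) y0 u0 v0)); auto.
    fb (fun i => Kf n v0 y0 * (Vxf n d (iA i) (iB i) (iC i) u0 (iS i) y0 - 2 * PI * v0 / d * Wxf n (iA i) (iB i) (iC i) (iS i) y0 * Vf n d (iA i) (iB i) (iC i) u0 (iS i) y0)).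
Qed.
End RX.

Section RY.
Variables (N D a b c : Z) (x0 y0 u0 v0 : R).
Hypotheses (HN : (1 <= N)%Z) (HD : D <> 0%Z) (Hy0 : 0 < y0) (Hv0 : 0 < v0).
Let n := IZR N.
Let d := IZR (Z.abs D).
Let xs := fun _ : R => x0.
Let ys := fun s : R => s.
Let DomS := fun s => y0 - y0 / 2 < s < y0 + y0 / 2.
Let al := 2 * PI * v0 / (4 * n * (y0 + y0 / 2) ^ 2 * d).

Ltac fb G := apply (bound_of n (y0 / 2) xs ys DomS al _ G
     (fun i => Ef n d (iA i) (iB i) (iC i) v0 x0 (iS i))); auto; try (intros s Ds; unfold DomS in Ds; unfold ys; lra);
     [ intros i _; unfold iA, iB, iC, iS; simpl; unfold Ef; ring
     | intros i Di; unfold al, xs, ys, Ef; unfold DomS in Di; apply (E_bnd n d _ _ _ x0 (iS i) v0 v0 (y0 + y0 / 2)); auto; lra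
     | let HY := fresh in assert (HY : forall i : Ix, DomS (iS i) -> y0 / 2 <= ys (iS i)) by (intros i Di; unfold DomS in Di; unfold ys; lra);
       let Hn' := fresh in assert (Hn' : 0 < n) by (unfold n; apply (IZR_lt 0); lia);
       let Hy2 := fresh in assert (Hy2 : 0 < y0 / 2) by lra;
       pose proof (UBx_Qv n (y0 / 2) (fun i => xs (iS i)) (fun i => ys (iS i)) (fun i => DomS (iS i)) Hn' Hy2 HY);
       pose proof (UBx_Px n (y0 / 2) (fun i => xs (iS i)) (fun i => ys (iS i)) (fun i => DomS (iS i)) Hy2 HY);
       pose proof (UBx_Iqx n (y0 / 2) (fun i => xs (iS i)) (fun i => ys (iS i)) (fun i => DomS (iS i)) Hn' Hy2 HY);
       pose proof (inv_atom n (y0 / 2) (fun i => xs (iS i)) (fun i => ys (iS i)) (fun i => DomS (iS i)) (4 * n) 2 ltac:(lra) Hy2 HY);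
       pose proof (inv_atom n (y0 / 2) (fun i => xs (iS i)) (fun i => ys (iS i)) (fun i => DomS (iS i)) (4 * n) 3 ltac:(lra) Hy2 HY);
       pose proof (inv_atom n (y0 / 2) (fun i => xs (iS i)) (fun i => ys (iS i)) (fun i => DomS (iS i)) (2 * n) 3 ltac:(lra) Hy2 HY);
       unfold Kf, Kyf, Uf, Vf, Uyf, Vyf, Wyf, th, Rdiv; ubx ].

Lemma RY_M : exists M, summ M /\ forall k1 k2 k3 s, DomS s ->
  let A := IZR (a + D * k1) in let B := IZR (b + 2 * N * D * k2) in let C := IZR (c + D * k3) in
    Rabs (Re (NR n d A B C x0 s u0 v0)) <= M k1 k2 k3 /\ Rabs (Im (NR n d A B C x0 s u0 v0)) <= M k1 k2 k3 /\
    Rabs (Re (NRy' n d A B C x0 s u0 v0)) <= M k1 k2 k3 /\ Rabs (Im (NRy' n d A B C x0 s u0 v0)) <= M k1 k2 k3.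
Proof.
  assert (Hn' : 0 < n) by (apply (IZR_lt 0); lia). assert (Hd' : 0 < d) by (apply (IZR_lt 0); lia).
  assert (0 < al). { pose proof PI_RGT_0. unfold al. apply Rdiv_lt_0_compat; [nra|].
    apply Rmult_lt_0_compat; [|lra]. apply Rmult_lt_0_compat; [lra|apply pow_lt; lra]. }
  assert (HX : forall s, DomS s -> Rabs (xs s) <= Rabs x0 /\ y0 / 2 <= ys s <= y0 + y0 / 2).
  { intros s Ds. unfold DomS, xs, ys in *. split; lra. }
  assert (Hy2 : 0 < y0 / 2) by lra.
  apply four.
  - famM N D a b c xs ys DomS (Rabs x0) (y0 / 2) (y0 + y0 / 2) al (fun i => Re (NR n d (iA i) (iB i) (iC i) x0 (iS i) u0 v0)); auto.
    fb (fun i => - sqrt v0 / (4 * n * iS i ^ 2) * (Rqf n (iA i) (iB i) (iC i) x0 (iS i) * cos (th n d (iA i) (iB i) (iC i) * u0)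
       + Iqf n (iA i) (iB i) (iC i) x0 (iS i) * sin (th n d (iA i) (iB i) (iC i) * u0))).
  - famM N D a b c xs ys DomS (Rabs x0) (y0 / 2) (y0 + y0 / 2) al (fun i => Im (NR n d (iA i) (iB i) (iC i) x0 (iS i) u0 v0)); auto.
    fb (fun i => - sqrt v0 / (4 * n * iS i ^ 2) * (Iqf n (iA i) (iB i) (iC i) x0 (iS i) * cos (th n d (iA i) (iB i) (iC i) * u0)
       - Rqf n (iA i) (iB i) (iC i) x0 (iS i) * sin (th n d (iA i) (iB i) (iC i) * u0))).
  - famM N D a b c xs ys DomS (Rabs x0) (y0 / 2) (y0 + y0 / 2) al (fun i => Re (NRy' n d (iA i) (iB i) (iC i) x0 (iS i) u0 v0)); auto.
    fb (fun i => Kyf n v0 (iS i) * Uf n d (iA i) (iB i) (iC i) u0 x0 (iS i) + Kf n v0 (iS i) * (Uyf n d (iA i) (iB i) (iC i) u0 x0 (iS i) - 2 * PI * v0 / d * Wyf n (iA i) (iB i) (iC i) x0 (iS i) * Uf n d (iA i) (iB i) (iC i) u0 x0 (iS i))).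
  - famM N D a b c xs ys DomS (Rabs x0) (y0 / 2) (y0 + y0 / 2) al (fun i => Im (NRy' n d (iA i) (iB i) (iC i) x0 (iS i) u0 v0)); auto.
    fb (fun i => Kyf n v0 (iS i) * Vf n d (iA i) (iB i) (iC i) u0 x0 (iS i) + Kf n v0 (iS i) * (Vyf n d (iA i) (iB i) (iC i) u0 x0 (iS i) - 2 * PI * v0 / d * Wyf n (iA i) (iB i) (iC i) x0 (iS i) * Vf n d (iA i) (iB i) (iC i) u0 x0 (iS i))).
Qed.
End RY.

Lemma term_id n d A B Cc x0 y0 u0 v0 : 0 < n -> 0 < d -> 0 < y0 -> 0 < v0 ->
  (- 2 * Ci * RtoC (sqrt v0) * Cconj (/ 2 * (NLu' n d A B Cc x0 y0 u0 v0 + Ci * NLv' n d A B Cc x0 y0 u0 v0)))%C =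
  (4 * Ci * RtoC (sqrt n) * RtoC (y0 ^ 2) * (/ 2 * (NRx' n d A B Cc x0 y0 u0 v0 - Ci * NRy' n d A B Cc x0 y0 u0 v0)))%C.
Proof.
  intros Hn Hd Hy Hv.
  unfold NLu', NLv', NRx', NRy', Kf, Kyf, Ef, Uf, Vf, Uxf, Vxf, Uyf, Vyf, Wxf, Wyf, Pxf, Iqxf, pv.
  set (E := exp (- 2 * PI * v0 * Wf n A B Cc x0 y0 / d)).
  set (cs := cos (th n d A B Cc * u0)). set (sn := sin (th n d A B Cc * u0)).
  unfold th, Wf, Sf, Qv, Pf, Rqf, Iqf.
  clearbody E cs sn.
  assert (Hr : 0 < sqrt n) by (apply sqrt_lt_R0; auto).
  assert (Hnr : n = sqrt n * sqrt n) by (rewrite sqrt_sqrt; lra).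
  set (r := sqrt n) in *. clearbody r. subst n.
  unfold Cconj, Cmult, Cplus, Cminus, Copp, Cinv, RtoC, Ci; simpl.
  apply f_equal2; field; repeat split; lra.
Qed.

Ltac ceq := apply injective_projections; simpl; (ring || (field; repeat split; lra)).

Definition TS (N D : Z) (V : Z -> Z -> Z -> C) : C :=
  let AD := Z.to_nat (Z.abs D) in
  csum (zrange 0 AD) (fun a =>
  csum (zrange 0 (Z.to_nat (2 * N) * AD)) (fun b =>
  csum (zrange 0 AD) (fun c => V a b c))).

Definition condP (N D r h a b c : Z) : Prop :=
  (2 * N | b - r * h)%Z /\
  exists k : Z, (QD N D (lamL' N a b c) - IZR (Z.sgn D) * (- IZR (h * h) / (4 * IZR N)))%R = IZR k.

Definition Vg (N D r h : Z) (g : Z -> Z -> Z -> Z -> Z -> Z -> C) (a b c : Z) : C :=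
  if excluded_middle_informative (condP N D r h a b c)
  then (RtoC (IZR (chi N D a b c)) * lattice_sum (g a b c))%C else RtoC 0.

Lemma Theta_eq N D r psi t w h :
  Theta N D r psi t w h = (RtoC (sqrt (Im t)) *
    TS N D (Vg N D r h (fun a b c k1 k2 k3 => psi (a + D * k1)%Z (b + 2 * N * D * k2)%Z (c + D * k3)%Z t w)))%C.
Proof. reflexivity. Qed.

Lemma csum_ext {A} (l : list A) f g : (forall x, f x = g x) -> csum l f = csum l g.
Proof. intros H; induction l; simpl; auto. rewrite H, IHl; auto. Qed.

Lemma csum_lin {A} (l : list A) (p q : C) f g :
  (p * csum l f + q * csum l g)%C = csum l (fun x => p * f x + q * g x)%C.
Proof. induction l; simpl. ceq. rewrite <- IHl. ceq. Qed.

Lemma csum_conj {A} (l : list A) f : Cconj (csum l f) = csum l (fun x => Cconj (f x)).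
Proof. induction l; simpl. ceq. rewrite <- IHl. ceq. Qed.

Lemma TS_ext N D V W : (forall a b c, V a b c = W a b c) -> TS N D V = TS N D W.
Proof. intros H. unfold TS. apply csum_ext; intros; apply csum_ext; intros; apply csum_ext; intros; auto. Qed.

Lemma TS_lin N D (p q : C) V W : (p * TS N D V + q * TS N D W)%C = TS N D (fun a b c => p * V a b c + q * W a b c)%C.
Proof. unfold TS. rewrite csum_lin. apply csum_ext; intros. rewrite csum_lin. apply csum_ext; intros.
  rewrite csum_lin. reflexivity. Qed.

Lemma TS_scal N D (p : C) V : (p * TS N D V)%C = TS N D (fun a b c => p * V a b c)%C.
Proof. transitivity (p * TS N D V + 0 * TS N D V)%C. ceq. rewrite TS_lin. apply TS_ext; intros. ceq. Qed.

Lemma TS_conj N D V : Cconj (TS N D V) = TS N D (fun a b c => Cconj (V a b c)).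
Proof. unfold TS. rewrite csum_conj. apply csum_ext; intros. rewrite csum_conj. apply csum_ext; intros.
  rewrite csum_conj. reflexivity. Qed.

Lemma cderiv_TS N D (V : R -> Z -> Z -> Z -> C) V' s0 :
  (forall a b c, cderiv (fun s => V s a b c) s0 (V' a b c)) -> cderiv (fun s => TS N D (V s)) s0 (TS N D V').
Proof. intros H. unfold TS.
  apply (cderiv_csum _ (fun a s => csum _ (fun b => csum _ (fun c => V s a b c)))). intros a.
  apply (cderiv_csum _ (fun b s => csum _ (fun c => V s a b c))). intros b.
  apply (cderiv_csum _ (fun c s => V s a b c)). intros c. apply H.
Qed.

Lemma cderiv_Vg N D r h (g : R -> Z -> Z -> Z -> Z -> Z -> Z -> C) L s0 a b c :
  cderiv (fun s => lattice_sum (g s a b c)) s0 (L a b c) ->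
  cderiv (fun s => Vg N D r h (g s) a b c) s0
    (if excluded_middle_informative (condP N D r h a b c) then (RtoC (IZR (chi N D a b c)) * L a b c)%C else RtoC 0).
Proof. intros H. unfold Vg. destruct (excluded_middle_informative _).
  - apply (cderiv_cmul _ (fun s => lattice_sum (g s a b c))); auto.
  - apply cderiv_const.
Qed.

Lemma ls_conv_conj f : ls_conv f -> ls_conv (fun k1 k2 k3 => Cconj (f k1 k2 k3)).
Proof. intros [H1 H2]. split.
  - destruct H1 as [l Hl]. exists l. eapply is_lim_seq_ext; [|exact Hl]. intros n. apply rbox_ext. intros; unfold reF; reflexivity.
  - destruct H2 as [l Hl]. exists (-1 * l). eapply is_lim_seq_ext; [|apply (is_lim_seq_scal_l (rbox (imF f)) (-1) (Finite l)); exact Hl].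
    intros n. rewrite (rbox_ext (imF (fun k1 k2 k3 => Cconj (f k1 k2 k3))) (fun k1 k2 k3 => -1 * imF f k1 k2 k3))
      by (intros; unfold imF, Im; simpl; ring). rewrite rbox_scal. reflexivity.
Qed.

Lemma G1 (chi : R) (p q : C) f g : ls_conv f -> ls_conv g ->
  (p * (RtoC chi * lattice_sum f) + q * (RtoC chi * lattice_sum g))%C =
  (RtoC chi * lattice_sum (fun k1 k2 k3 => p * f k1 k2 k3 + q * g k1 k2 k3))%C /\
  ls_conv (fun k1 k2 k3 => p * f k1 k2 k3 + q * g k1 k2 k3)%C.
Proof. intros Hf Hg. destruct (ls_lin p q f g Hf Hg) as [E Hc]. split; auto. rewrite E. ceq. Qed.

Lemma G2 (chi : R) f : Cconj (RtoC chi * lattice_sum f)%C = (RtoC chi * lattice_sum (fun k1 k2 k3 => Cconj (f k1 k2 k3)))%C.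
Proof. rewrite <- ls_conj. ceq. Qed.

Lemma G3 (chi : R) (p : C) f : ls_conv f ->
  (p * (RtoC chi * lattice_sum f))%C = (RtoC chi * lattice_sum (fun k1 k2 k3 => p * f k1 k2 k3))%C.
Proof. intros Hf. transitivity (p * (RtoC chi * lattice_sum f) + 0 * (RtoC chi * lattice_sum f))%C. ceq.
  rewrite (proj1 (G1 chi p 0 f f Hf Hf)). f_equal. apply ls_ext. intros; ceq. Qed.

Section Steps.
Variables (N D a b c : Z) (x0 y0 u0 v0 : R).
Hypotheses (HN : (1 <= N)%Z) (HD : D <> 0%Z) (Hy0 : 0 < y0) (Hv0 : 0 < v0).
Let n := IZR N.
Let d := IZR (Z.abs D).
Let Hn' : 0 < n. Proof. apply (IZR_lt 0); lia. Qed.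
Let Hd' : 0 < d. Proof. apply (IZR_lt 0); lia. Qed.

Lemma stepLU :
  cderiv (fun s => lattice_sum (fun k1 k2 k3 => NL n d (IZR (a + D * k1)) (IZR (b + 2 * N * D * k2)) (IZR (c + D * k3)) x0 y0 s v0)) u0
    (lattice_sum (fun k1 k2 k3 => NLu' n d (IZR (a + D * k1)) (IZR (b + 2 * N * D * k2)) (IZR (c + D * k3)) x0 y0 u0 v0))
  /\ ls_conv (fun k1 k2 k3 => NLu' n d (IZR (a + D * k1)) (IZR (b + 2 * N * D * k2)) (IZR (c + D * k3)) x0 y0 u0 v0).
Proof.
  destruct (LU_M N D a b c x0 y0 v0 HN HD Hy0 Hv0) as [M [HM HB]].
  destruct (GLC (fun k1 k2 k3 s => NL n d (IZR (a + D * k1)) (IZR (b + 2 * N * D * k2)) (IZR (c + D * k3)) x0 y0 s v0)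
     (fun k1 k2 k3 s => NLu' n d (IZR (a + D * k1)) (IZR (b + 2 * N * D * k2)) (IZR (c + D * k3)) x0 y0 s v0) M u0 1)
    as [H1 [H2 H3]]; auto; try lra.
  - intros; apply der_NLu; auto; lra.
  - intros; apply cont_NLu; auto; lra.
  - intros; apply cont_NLu; auto; lra.
  - intros; apply (HB k1 k2 k3 s I).
  - intros; apply (HB k1 k2 k3 s I).
  - intros; apply (HB k1 k2 k3 s I).
  - intros; apply (HB k1 k2 k3 s I).
Qed.

Lemma stepLV :
  cderiv (fun s => lattice_sum (fun k1 k2 k3 => NL n d (IZR (a + D * k1)) (IZR (b + 2 * N * D * k2)) (IZR (c + D * k3)) x0 y0 u0 s)) v0
    (lattice_sum (fun k1 k2 k3 => NLv' n d (IZR (a + D * k1)) (IZR (b + 2 * N * D * k2)) (IZR (c + D * k3)) x0 y0 u0 v0))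
  /\ ls_conv (fun k1 k2 k3 => NLv' n d (IZR (a + D * k1)) (IZR (b + 2 * N * D * k2)) (IZR (c + D * k3)) x0 y0 u0 v0).
Proof.
  destruct (LV_M N D a b c x0 y0 u0 v0 HN HD Hy0 Hv0) as [M [HM HB]].
  destruct (GLC (fun k1 k2 k3 s => NL n d (IZR (a + D * k1)) (IZR (b + 2 * N * D * k2)) (IZR (c + D * k3)) x0 y0 u0 s)
     (fun k1 k2 k3 s => NLv' n d (IZR (a + D * k1)) (IZR (b + 2 * N * D * k2)) (IZR (c + D * k3)) x0 y0 u0 s) M v0 (v0 / 2))
    as [H1 [H2 H3]]; auto; try lra.
  - intros; apply der_NLv; auto; lra.
  - intros; apply cont_NLv; auto; lra.
  - intros; apply cont_NLv; auto; lra.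
  - intros; apply (HB k1 k2 k3 s); auto.
  - intros; apply (HB k1 k2 k3 s); auto.
  - intros; apply (HB k1 k2 k3 s); auto.
  - intros; apply (HB k1 k2 k3 s); auto.
Qed.

Lemma stepRX :
  cderiv (fun s => lattice_sum (fun k1 k2 k3 => NR n d (IZR (a + D * k1)) (IZR (b + 2 * N * D * k2)) (IZR (c + D * k3)) s y0 u0 v0)) x0
    (lattice_sum (fun k1 k2 k3 => NRx' n d (IZR (a + D * k1)) (IZR (b + 2 * N * D * k2)) (IZR (c + D * k3)) x0 y0 u0 v0))
  /\ ls_conv (fun k1 k2 k3 => NRx' n d (IZR (a + D * k1)) (IZR (b + 2 * N * D * k2)) (IZR (c + D * k3)) x0 y0 u0 v0).
Proof.
  destruct (RX_M N D a b c x0 y0 u0 v0 HN HD Hy0 Hv0) as [M [HM HB]].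
  destruct (GLC (fun k1 k2 k3 s => NR n d (IZR (a + D * k1)) (IZR (b + 2 * N * D * k2)) (IZR (c + D * k3)) s y0 u0 v0)
     (fun k1 k2 k3 s => NRx' n d (IZR (a + D * k1)) (IZR (b + 2 * N * D * k2)) (IZR (c + D * k3)) s y0 u0 v0) M x0 1)
    as [H1 [H2 H3]]; auto; try lra.
  - intros; apply der_NRx; auto; lra.
  - intros; apply cont_NRx; auto; lra.
  - intros; apply cont_NRx; auto; lra.
  - intros; apply (HB k1 k2 k3 s); auto.
  - intros; apply (HB k1 k2 k3 s); auto.
  - intros; apply (HB k1 k2 k3 s); auto.
  - intros; apply (HB k1 k2 k3 s); auto.
Qed.

Lemma stepRY :
  cderiv (fun s => lattice_sum (fun k1 k2 k3 => NR n d (IZR (a + D * k1)) (IZR (b + 2 * N * D * k2)) (IZR (c + D * k3)) x0 s u0 v0)) y0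
    (lattice_sum (fun k1 k2 k3 => NRy' n d (IZR (a + D * k1)) (IZR (b + 2 * N * D * k2)) (IZR (c + D * k3)) x0 y0 u0 v0))
  /\ ls_conv (fun k1 k2 k3 => NRy' n d (IZR (a + D * k1)) (IZR (b + 2 * N * D * k2)) (IZR (c + D * k3)) x0 y0 u0 v0).
Proof.
  destruct (RY_M N D a b c x0 y0 u0 v0 HN HD Hy0 Hv0) as [M [HM HB]].
  destruct (GLC (fun k1 k2 k3 s => NR n d (IZR (a + D * k1)) (IZR (b + 2 * N * D * k2)) (IZR (c + D * k3)) x0 s u0 v0)
     (fun k1 k2 k3 s => NRy' n d (IZR (a + D * k1)) (IZR (b + 2 * N * D * k2)) (IZR (c + D * k3)) x0 s u0 v0) M y0 (y0 / 2))
    as [H1 [H2 H3]]; auto; try lra.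
  - intros; apply der_NRy; auto; lra.
  - intros; apply cont_NRy; auto; lra.
  - intros; apply cont_NRy; auto; lra.
  - intros; apply (HB k1 k2 k3 s); auto.
  - intros; apply (HB k1 k2 k3 s); auto.
  - intros; apply (HB k1 k2 k3 s); auto.
  - intros; apply (HB k1 k2 k3 s); auto.
Qed.
End Steps.

Definition Fam (N D : Z) (G : R -> R -> R -> R -> R -> R -> R -> R -> R -> C) (x y u v : R) :=
  fun a b c k1 k2 k3 => G (IZR N) (IZR (Z.abs D)) (IZR (a + D * k1)) (IZR (b + 2 * N * D * k2)) (IZR (c + D * k3)) x y u v.

Definition DV N D r h (G : R -> R -> R -> R -> R -> R -> R -> R -> R -> C) x y u v :=
  fun a b c => if excluded_middle_informative (condP N D r h a b c)
     then (RtoC (IZR (chi N D a b c)) * lattice_sum (Fam N D G x y u v a b c))%C else RtoC 0.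

Lemma CA1 (s : R) (ch L : C) : (RtoC s * (ch * L))%C = (ch * (RtoC s * L))%C.
Proof. ceq. Qed.
Lemma CA2 (s : R) (ch : R) (L : C) : Cconj (RtoC s * (RtoC ch * L))%C = (RtoC ch * Cconj (RtoC s * L))%C.
Proof. ceq. Qed.

Lemma EU N D r h x0 y0 u0 v0 : (1 <= N)%Z -> D <> 0%Z -> 0 < y0 -> 0 < v0 ->
  dR (fun s => Theta N D r (phi N D) (s, v0) (x0, y0) h) u0 = TS N D (DV N D r h NLu' x0 y0 u0 v0).
Proof.
  intros HN HD Hy Hv.
  rewrite (dR_ext_loc _ (fun s => TS N D (Vg N D r h (Fam N D NL x0 y0 s v0)))).
  2: { apply filter_forall. intros s. rewrite Theta_eq. change (Im (s, v0)) with v0. rewrite TS_scal.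
       apply TS_ext; intros a b c. unfold Vg. destruct (excluded_middle_informative _).
       - rewrite CA1, ls_rscal. apply f_equal. apply ls_ext; intros. unfold Fam. apply conv_L; auto.
       - ceq. }
  apply dR_cderiv. apply cderiv_TS. intros a b c. unfold DV.
  apply (cderiv_Vg N D r h (fun s => Fam N D NL x0 y0 s v0) (fun a b c => lattice_sum (Fam N D NLu' x0 y0 u0 v0 a b c))).
  apply stepLU; auto.
Qed.

Lemma EV N D r h x0 y0 u0 v0 : (1 <= N)%Z -> D <> 0%Z -> 0 < y0 -> 0 < v0 ->
  dR (fun s => Theta N D r (phi N D) (u0, s) (x0, y0) h) v0 = TS N D (DV N D r h NLv' x0 y0 u0 v0).
Proof.
  intros HN HD Hy Hv.
  rewrite (dR_ext_loc _ (fun s => TS N D (Vg N D r h (Fam N D NL x0 y0 u0 s)))).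
  2: { apply (filter_imp (fun s => 0 < s)); [|apply (open_gt 0); auto].
       intros s Hs. rewrite Theta_eq. change (Im (u0, s)) with s. rewrite TS_scal.
       apply TS_ext; intros a b c. unfold Vg. destruct (excluded_middle_informative _).
       - rewrite CA1, ls_rscal. apply f_equal. apply ls_ext; intros. unfold Fam. apply conv_L; auto.
       - ceq. }
  apply dR_cderiv. apply cderiv_TS. intros a b c. unfold DV.
  apply (cderiv_Vg N D r h (fun s => Fam N D NL x0 y0 u0 s) (fun a b c => lattice_sum (Fam N D NLv' x0 y0 u0 v0 a b c))).
  apply stepLV; auto.
Qed.

Lemma EX N D r h x0 y0 u0 v0 : (1 <= N)%Z -> D <> 0%Z -> 0 < y0 -> 0 < v0 ->
  dR (fun s => Cconj (Theta N D r (phiSh N D) (u0, v0) (s, y0) h)) x0 = TS N D (DV N D r h NRx' x0 y0 u0 v0).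
Proof.
  intros HN HD Hy Hv.
  rewrite (dR_ext_loc _ (fun s => TS N D (Vg N D r h (Fam N D NR s y0 u0 v0)))).
  2: { apply filter_forall. intros s. rewrite Theta_eq. change (Im (u0, v0)) with v0. rewrite TS_scal, TS_conj.
       apply TS_ext; intros a b c. unfold Vg. destruct (excluded_middle_informative _).
       - rewrite CA2, ls_rscal, ls_conj. apply f_equal. apply ls_ext; intros. unfold Fam. apply conv_R; auto.
       - ceq. }
  apply dR_cderiv. apply cderiv_TS. intros a b c. unfold DV.
  apply (cderiv_Vg N D r h (fun s => Fam N D NR s y0 u0 v0) (fun a b c => lattice_sum (Fam N D NRx' x0 y0 u0 v0 a b c))).
  apply stepRX; auto.
Qed.

Lemma EY N D r h x0 y0 u0 v0 : (1 <= N)%Z -> D <> 0%Z -> 0 < y0 -> 0 < v0 ->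
  dR (fun s => Cconj (Theta N D r (phiSh N D) (u0, v0) (x0, s) h)) y0 = TS N D (DV N D r h NRy' x0 y0 u0 v0).
Proof.
  intros HN HD Hy Hv.
  rewrite (dR_ext_loc _ (fun s => TS N D (Vg N D r h (Fam N D NR x0 s u0 v0)))).
  2: { apply (filter_imp (fun s => 0 < s)); [|apply (open_gt 0); auto].
       intros s Hs. rewrite Theta_eq. change (Im (u0, v0)) with v0. rewrite TS_scal, TS_conj.
       apply TS_ext; intros a b c. unfold Vg. destruct (excluded_middle_informative _).
       - rewrite CA2, ls_rscal, ls_conj. apply f_equal. apply ls_ext; intros. unfold Fam. apply conv_R; auto.
       - ceq. }
  apply dR_cderiv. apply cderiv_TS. intros a b c. unfold DV.
  apply (cderiv_Vg N D r h (fun s => Fam N D NR x0 s u0 v0) (fun a b c => lattice_sum (Fam N D NRy' x0 y0 u0 v0 a b c))).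
  apply stepRY; auto.
Qed.

Lemma fund_disc_nz D : fund_disc D -> D <> 0%Z.
Proof. intros [[H1 _]|[m [-> [H2 _]]]] E.
  - subst. simpl in H1. discriminate.
  - assert (m = 0)%Z by lia. subst. simpl in H2. destruct H2; discriminate. Qed.

Lemma CL (X Y : C) (s : R) : (- 2 * Ci * RtoC s * Cconj (/ 2 * (X + Ci * Y)))%C =
  ((- 2 * Ci * RtoC s) * Cconj (/ 2 * X + (/ 2 * Ci) * Y))%C.
Proof. ceq. Qed.
Lemma CR (X Y : C) (t y : R) : (4 * Ci * RtoC t * RtoC y * (/ 2 * (X - Ci * Y)))%C =
  ((4 * Ci * RtoC t * RtoC y * / 2) * X + (- (4 * Ci * RtoC t * RtoC y * / 2 * Ci)) * Y)%C.
Proof. ceq. Qed.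

Theorem lemma1 (N D r : Z) (HN : (1 <= N)%Z) (HD : fund_disc D)
  (Hr : (4 * N | D - r * r)%Z) (tau z : C) (Htau : (0 < Im tau)%R) (Hz : (0 < Im z)%R)
  (h : Z) (Hh : (0 <= h < 2 * N)%Z) :
  xi_half (fun t => Theta N D r (phi N D) t z h) tau =
  (4 * Ci * RtoC (sqrt (IZR N)) * RtoC (Im z ^ 2) *
   dhol (fun w => Cconj (Theta N D r (phiSh N D) tau w h)) z)%C.
Proof.
  destruct tau as [u0 v0], z as [x0 y0]. simpl in Htau, Hz.
  pose proof (fund_disc_nz D HD) as HD0.
  unfold xi_half, dbar, dhol.
  change (Re (u0, v0)) with u0. change (Im (u0, v0)) with v0.
  change (Re (x0, y0)) with x0. change (Im (x0, y0)) with y0.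
  cbv beta.
  rewrite (EU N D r h x0 y0 u0 v0), (EV N D r h x0 y0 u0 v0), (EX N D r h x0 y0 u0 v0), (EY N D r h x0 y0 u0 v0) by auto.
  rewrite CL, CR. rewrite TS_lin, TS_conj, TS_scal, TS_lin.
  apply TS_ext. intros a b c. unfold DV.
  destruct (excluded_middle_informative (condP N D r h a b c)); [|ceq].
  destruct (stepLU N D a b c x0 y0 u0 v0 HN HD0 Hz Htau) as [_ CU].
  destruct (stepLV N D a b c x0 y0 u0 v0 HN HD0 Hz Htau) as [_ CV].
  destruct (stepRX N D a b c x0 y0 u0 v0 HN HD0 Hz Htau) as [_ CX].
  destruct (stepRY N D a b c x0 y0 u0 v0 HN HD0 Hz Htau) as [_ CY].
  destruct (G1 (IZR (chi N D a b c)) (/ 2) (/ 2 * Ci) _ _ CU CV) as [E1 C1].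
  unfold Fam; cbv beta. rewrite E1, G2. rewrite G3 by (apply ls_conv_conj; exact C1).
  destruct (G1 (IZR (chi N D a b c)) (4 * Ci * RtoC (sqrt (IZR N)) * RtoC (y0 ^ 2) * / 2)
     (- (4 * Ci * RtoC (sqrt (IZR N)) * RtoC (y0 ^ 2) * / 2 * Ci)) _ _ CX CY) as [E2 _].
  rewrite E2.
  apply f_equal. apply ls_ext. intros k1 k2 k3.
  set (n := IZR N). set (d := IZR (Z.abs D)).
  set (A := IZR (a + D * k1)). set (B := IZR (b + 2 * N * D * k2)). set (C := IZR (c + D * k3)).
  rewrite <- CR. rewrite <- (CL _ _ (sqrt v0)).
  apply term_id; auto. unfold n; apply (IZR_lt 0); lia. unfold d; apply (IZR_lt 0); lia.
Qed.
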